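(* Let $\mathbf{X}$ be $\mathbb{R}P^n$ with $G_{\mathbf{X}} = \mathrm{PGL}(n+1,\mathbb{R})$ ($n\ge 2$), or $\mathrm{Ein}^{p,q}$ with $G_{\mathbf{X}}=\mathrm{PO}(p+1,q+1)$ ($\min(p,q)\ge 2$), and fix a Riemannian metric on $\mathbf{X}$. Let $(g_k)$ be a sequence in $G_{\mathbf{X}}$, $(T_k)$ a sequence of positive numbers with $T_k\to\infty$, and $x \in \mathbf{X}$ such that: (1) for every sequence $x_k\rightarrow x$, we have $g_k x_k \rightarrow x$; (2) for every non-zero $v \in T_{x}\mathbf{X}$, $\frac{1}{T_k} \log \|D_{x}g_k v\| \rightarrow -1$. Then, up to passing to a subsequence, there exists an open set $W_{\max} \ni x$ which is an affine chart domain (the complement of a projective hyperplane) if $\mathbf{X} = \mathbb{R}P^n$, or a Minkowski patch if $\mathbf{X} = \mathrm{Ein}^{p,q}$, such that for every compact subset $K \subset W_{\max}$, $g_kK \rightarrow \{x\}$ for the Hausdorff topology.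
   Context: $\mathrm{Ein}^{p,q}$ is the set of isotropic lines of $\mathbb{R}^{p+1,q+1}$ with the induced conformal structure; a Minkowski patch of $\mathrm{Ein}^{p,q}$ is $M_y=\{[w]:B(v,w)\neq0\}$ for an isotropic vector $v$, $y=[v]$, where $B$ is the bilinear form of signature $(p+1,q+1)$. *)

(* Defs.v *)
From Stdlib Require Export Reals.
Open Scope R_scope.

(* Vectors of R^N are functions nat -> R (only coordinates 0..N-1 matter),
   matrices are functions nat -> nat -> R. *)
Definition Vec := nat -> R.
Definition Mat := nat -> nat -> R.

Fixpoint sumN (n : nat) (f : nat -> R) : R :=
  match n with O => 0 | S m => sumN m f + f m end.

Definition dot (N : nat) (u v : Vec) : R := sumN N (fun i => u i * v i).
Definition vnorm (N : nat) (u : Vec) : R := sqrt (dot N u u).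
Definition nonzero (N : nat) (u : Vec) : Prop := exists i, (i < N)%nat /\ u i <> 0.
Definition mv (N : nat) (A : Mat) (u : Vec) : Vec :=
  fun i => sumN N (fun j => A i j * u j).
Definition mm (N : nat) (A B : Mat) : Mat :=
  fun i j => sumN N (fun l => A i l * B l j).
Definition idm : Mat := fun i j => if Nat.eqb i j then 1 else 0.
Definition invertible (N : nat) (A : Mat) : Prop :=
  exists B : Mat, forall i j, (i < N)%nat -> (j < N)%nat ->
    mm N A B i j = idm i j /\ mm N B A i j = idm i j.

Definition qform (p q : nat) (u v : Vec) : R :=
  sumN (p + 1) (fun i => u i * v i)
  - sumN (q + 1) (fun i => u (p + 1 + i)%nat * v (p + 1 + i)%nat).

(* The model spaces: RP^n, and Ein^{p,q} (isotropic lines in R^{p+1,q+1}). *)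
Inductive model := RPn (n : nat) | Ein (p q : nat).

Definition mdim (X : model) : nat :=
  match X with RPn n => S n | Ein p q => (p + q + 2)%nat end.

Definition admissible (X : model) : Prop :=
  match X with RPn n => (2 <= n)%nat | Ein p q => (2 <= p)%nat /\ (2 <= q)%nat end.

(* u (a nonzero vector) represents a point [u] of X *)
Definition is_point (X : model) (u : Vec) : Prop :=
  nonzero (mdim X) u /\
  match X with RPn _ => True | Ein p q => qform p q u u = 0 end.

(* A matrix representing an element of G_X: PGL(n+1,R), resp. PO(p+1,q+1)
   (every element of these groups lifts to such a matrix, and the action on
   X is the induced action on lines). *)
Definition in_group (X : model) (A : Mat) : Prop :=
  invertible (mdim X) A /\
  match X with
  | RPn _ => True
  | Ein p q => forall u v, qform p q (mv (mdim X) A u) (mv (mdim X) A v) = qform p q u v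
  end.

(* Fixed Riemannian metric: the round metric of RP^{N-1} (quotient of the unit
   sphere), restricted to Ein^{p,q} in the second case.  Its distance function
   is the sine of the angle between lines (chordal metric on lines). *)
Definition pdist (N : nat) (u v : Vec) : R :=
  sqrt (1 - (dot N u v) ^ 2 / (dot N u u * dot N v v)).

Definition pconv (X : model) (xs : nat -> Vec) (x : Vec) : Prop :=
  Un_cv (fun k => pdist (mdim X) (xs k) x) 0.

(* Tangent vectors at [u]: the vector v (with <u,v> = 0) represents the tangent
   vector d/dt [u + t v] at t = 0.  For Ein also B(u,v) = 0. *)
Definition is_tangent (X : model) (u v : Vec) : Prop :=
  nonzero (mdim X) v /\ dot (mdim X) u v = 0 /\
  match X with RPn _ => True | Ein p q => qform p q u v = 0 end.

(* Round-metric norm of D_{[u]} g (v), g represented by A: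
   it is the norm of d/dt [A u + t A v] at t = 0. *)
Definition dnorm (N : nat) (A : Mat) (u v : Vec) : R :=
  let Au := mv N A u in
  let Av := mv N A v in
  vnorm N (fun i => Av i - (dot N Av Au / dot N Au Au) * Au i) / vnorm N Au.

(* Admissible "centers" of charts: a nonzero linear form a (affine chart
   {[w] : <a,w> <> 0}, complement of a projective hyperplane) for RP^n;
   an isotropic nonzero vector a (Minkowski patch {[w] : B(a,w) <> 0}) for Ein. *)
Definition chart_center (X : model) (a : Vec) : Prop :=
  match X with RPn _ => nonzero (mdim X) a | Ein _ _ => is_point X a end.

Definition in_chart (X : model) (a w : Vec) : Prop :=
  is_point X w /\
  match X with RPn _ => dot (mdim X) a w <> 0 | Ein p q => qform p q a w <> 0 end.

Definition strict_incr (phi : nat -> nat) : Prop := forall k, (phi k < phi (S k))%nat.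

(* compact subsets of X (metric space), as (sequential) compactness *)
Definition compactX (X : model) (K : Vec -> Prop) : Prop :=
  (forall y, K y -> is_point X y) /\
  forall ys : nat -> Vec, (forall k, K (ys k)) ->
    exists phi y, strict_incr phi /\ K y /\ pconv X (fun k => ys (phi k)) y.

Definition hconv_point (X : model) (S : nat -> Vec -> Prop) (x : Vec) : Prop :=
  forall eps, 0 < eps -> exists N0, forall k, (N0 <= k)%nat ->
    (forall z, S k z -> pdist (mdim X) z x < eps) /\
    (exists z, S k z /\ pdist (mdim X) z x < eps).

(* Main.v *)
Require Import Defs.
From Stdlib Require Import Reals.
From Stdlib Require Import Lra Lia Psatz FunctionalExtensionality ClassicalEpsilon Classical.
Open Scope R_scope.

Lemma sumN_ext n f g : (forall i, (i < n)%nat -> f i = g i) -> sumN n f = sumN n g.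
Proof. induction n; simpl; intros H; [reflexivity|]. rewrite IHn by (intros; apply H; lia). rewrite H by lia. reflexivity. Qed.

Lemma sumN_plus n f g : sumN n (fun i => f i + g i) = sumN n f + sumN n g.
Proof. induction n; simpl; [lra|]. rewrite IHn; lra. Qed.

Lemma sumN_minus n f g : sumN n (fun i => f i - g i) = sumN n f - sumN n g.
Proof. induction n; simpl; [lra|]. rewrite IHn; lra. Qed.

Lemma sumN_scal n c f : sumN n (fun i => c * f i) = c * sumN n f.
Proof. induction n; simpl; [lra|]. rewrite IHn; lra. Qed.

Lemma sumN_scal_r n c f : sumN n (fun i => f i * c) = sumN n f * c.
Proof. induction n; simpl; [lra|]. rewrite IHn; lra. Qed.

Lemma sumN_zero n f : (forall i, (i < n)%nat -> f i = 0) -> sumN n f = 0.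
Proof. intros H. rewrite (sumN_ext n f (fun _ => 0)) by auto. induction n; simpl; [lra|]. rewrite IHn; [lra|]. intros; apply H; lia. Qed.

Lemma sumN_le n f g : (forall i, (i < n)%nat -> f i <= g i) -> sumN n f <= sumN n g.
Proof. induction n; simpl; intros H; [lra|]. assert (sumN n f <= sumN n g) by (apply IHn; intros; apply H; lia).
  assert (f n <= g n) by (apply H; lia). lra. Qed.

Lemma sumN_nonneg n f : (forall i, (i < n)%nat -> 0 <= f i) -> 0 <= sumN n f.
Proof. intros H. replace 0 with (sumN n (fun _ => 0)). apply sumN_le; auto. apply sumN_zero; auto. Qed.

Lemma sumN_add n m f : sumN (n + m) f = sumN n f + sumN m (fun i => f (n + i)%nat).
Proof. induction m; simpl. rewrite Nat.add_0_r; lra. rewrite Nat.add_succ_r. simpl. rewrite IHm. lra. Qed.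

Lemma sumN_swap n m (F : nat -> nat -> R) :
  sumN n (fun i => sumN m (fun j => F i j)) = sumN m (fun j => sumN n (fun i => F i j)).
Proof. induction n; simpl. rewrite sumN_zero; auto. rewrite IHn. rewrite <- sumN_plus. reflexivity. Qed.

Lemma sumN_single n k f : (k < n)%nat -> (forall i, (i < n)%nat -> i <> k -> f i = 0) -> sumN n f = f k.
Proof. induction n; intros Hk H; [lia|]. simpl. destruct (Nat.eq_dec k n).
  - subst. rewrite sumN_zero. lra. intros; apply H; lia.
  - rewrite IHn by (try lia; intros; apply H; lia). rewrite (H n) by lia. lra. Qed.

Lemma term_le_sum n f k : (forall i, (i < n)%nat -> 0 <= f i) -> (k < n)%nat -> f k <= sumN n f.
Proof. induction n; intros H Hk; [lia|]. simpl. destruct (Nat.eq_dec k n).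
  - subst. assert (0 <= sumN n f) by (apply sumN_nonneg; intros; apply H; lia). lra.
  - assert (f k <= sumN n f) by (apply IHn; [intros; apply H; lia| lia]). assert (0 <= f n) by (apply H; lia). lra. Qed.

Lemma sumN_sq_zero n f : sumN n (fun i => f i * f i) = 0 -> forall i, (i < n)%nat -> f i = 0.
Proof. intros H i Hi. assert (f i * f i <= sumN n (fun i => f i * f i)).
  { apply (term_le_sum n (fun i => f i * f i)); auto. intros; nra. }
  nra. Qed.

Lemma sumN_abs n f : Rabs (sumN n f) <= sumN n (fun i => Rabs (f i)).
Proof. induction n; simpl. rewrite Rabs_R0; lra. eapply Rle_trans. apply Rabs_triang. lra. Qed.

Definition vadd (u v : Vec) : Vec := fun i => u i + v i.
Definition vsub (u v : Vec) : Vec := fun i => u i - v i.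
Definition vscal (c : R) (u : Vec) : Vec := fun i => c * u i.
Definition ev (k : nat) : Vec := fun i => if Nat.eqb i k then 1 else 0.
Definition vsum (n : nat) (F : nat -> Vec) : Vec := fun i => sumN n (fun j => F j i).

Section Vecs.
Variable N : nat.

Lemma dot_ext u u' v v' : (forall i, (i < N)%nat -> u i = u' i) -> (forall i, (i < N)%nat -> v i = v' i) -> dot N u v = dot N u' v'.
Proof. intros H1 H2. unfold dot. apply sumN_ext. intros. rewrite H1, H2 by auto. reflexivity. Qed.

Lemma dot_sym u v : dot N u v = dot N v u.
Proof. unfold dot. apply sumN_ext. intros; ring. Qed.

Lemma dot_add_l u v w : dot N (vadd u v) w = dot N u w + dot N v w.
Proof. unfold dot, vadd. rewrite <- sumN_plus. apply sumN_ext; intros; ring. Qed.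
Lemma dot_add_r u v w : dot N w (vadd u v) = dot N w u + dot N w v.
Proof. unfold dot, vadd. rewrite <- sumN_plus. apply sumN_ext; intros; ring. Qed.
Lemma dot_sub_l u v w : dot N (vsub u v) w = dot N u w - dot N v w.
Proof. unfold dot, vsub. rewrite <- sumN_minus. apply sumN_ext; intros; ring. Qed.
Lemma dot_sub_r u v w : dot N w (vsub u v) = dot N w u - dot N w v.
Proof. unfold dot, vsub. rewrite <- sumN_minus. apply sumN_ext; intros; ring. Qed.
Lemma dot_scal_l c u w : dot N (vscal c u) w = c * dot N u w.
Proof. unfold dot, vscal. rewrite <- sumN_scal. apply sumN_ext; intros; ring. Qed.
Lemma dot_scal_r c u w : dot N w (vscal c u) = c * dot N w u.
Proof. unfold dot, vscal. rewrite <- sumN_scal. apply sumN_ext; intros; ring. Qed.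

Lemma dot_ev k u : (k < N)%nat -> dot N (ev k) u = u k.
Proof. intros Hk. unfold dot, ev. rewrite (sumN_single N k); auto.
  - rewrite Nat.eqb_refl. ring.
  - intros i _ Hi. apply Nat.eqb_neq in Hi. rewrite Hi. ring. Qed.

Lemma dot_pos u : 0 <= dot N u u.
Proof. unfold dot. apply sumN_nonneg. intros; nra. Qed.

Lemma dot_zero_coord u : dot N u u = 0 -> forall i, (i < N)%nat -> u i = 0.
Proof. apply sumN_sq_zero. Qed.

Lemma nonzero_dot u : Defs.nonzero N u -> 0 < dot N u u.
Proof. intros [i [Hi Hu]]. destruct (dot_pos u) as [H|H]; auto. exfalso. apply Hu. apply dot_zero_coord; auto. Qed.

Lemma dot_nonzero u v : dot N u v <> 0 -> Defs.nonzero N u.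
Proof. intros H. destruct (Classical_Prop.classic (Defs.nonzero N u)) as [|Hn]; auto. exfalso. apply H.
  unfold dot. apply sumN_zero. intros i Hi. destruct (Req_dec (u i) 0) as [E|E]. rewrite E; ring.
  exfalso; apply Hn; exists i; auto. Qed.

Lemma CS u v : (dot N u v) ^ 2 <= dot N u u * dot N v v.
Proof.
  destruct (dot_pos v) as [Hv|Hv].
  - set (t := dot N u v / dot N v v).
    assert (H := dot_pos (vsub u (vscal t v))).
    rewrite dot_sub_l, !dot_sub_r, !dot_scal_l, !dot_scal_r in H.
    rewrite (dot_sym v u) in H. unfold t in H.
    assert (dot N u u - dot N u v ^ 2 / dot N v v >= 0).
    { replace (dot N u u - dot N u v ^ 2 / dot N v v) with
        (dot N u u - dot N u v / dot N v v * dot N u v - (dot N u v - dot N u v / dot N v v * dot N v v) * (dot N u v / dot N v v)) by (field; lra). lra. }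
    assert (dot N u v ^ 2 / dot N v v <= dot N u u) by lra.
    apply Rmult_le_reg_r with (/ dot N v v). apply Rinv_0_lt_compat; lra.
    replace (dot N u u * dot N v v * / dot N v v) with (dot N u u) by (field; lra). unfold Rdiv in *. lra.
  - assert (dot N u v = 0). { unfold dot. apply sumN_zero. intros i Hi. rewrite (dot_zero_coord v) by auto. ring. }
    rewrite H, <- Hv. simpl. lra. Qed.

Lemma vnorm_pos u : 0 <= vnorm N u.
Proof. apply sqrt_pos. Qed.
Lemma vnorm_sq u : vnorm N u * vnorm N u = dot N u u.
Proof. apply sqrt_sqrt, dot_pos. Qed.
Lemma vnorm_ext u v : (forall i, (i < N)%nat -> u i = v i) -> vnorm N u = vnorm N v.
Proof. intros H. unfold vnorm. f_equal. apply dot_ext; auto. Qed.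

Lemma abs_le_of_sq d a : 0 <= a -> d * d <= a * a -> Rabs d <= a.
Proof. intros Ha H. unfold Rabs; destruct (Rcase_abs d); nra. Qed.

Lemma dot_abs_le u v : Rabs (dot N u v) <= vnorm N u * vnorm N v.
Proof. apply abs_le_of_sq. pose proof (vnorm_pos u); pose proof (vnorm_pos v); nra.
  replace (vnorm N u * vnorm N v * (vnorm N u * vnorm N v)) with ((vnorm N u * vnorm N u) * (vnorm N v * vnorm N v)) by ring.
  rewrite !vnorm_sq. pose proof (CS u v). simpl in H. lra. Qed.

Lemma vnorm_le_sq a u : 0 <= a -> dot N u u <= a * a -> vnorm N u <= a.
Proof. intros Ha H. pose proof (vnorm_sq u). pose proof (vnorm_pos u). nra. Qed.
Lemma vnorm_ge_sq a u : 0 <= a -> a * a <= dot N u u -> a <= vnorm N u.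
Proof. intros Ha H. pose proof (vnorm_sq u). pose proof (vnorm_pos u). nra. Qed.

Lemma vnorm_triang u v : vnorm N (vadd u v) <= vnorm N u + vnorm N v.
Proof. apply vnorm_le_sq. pose proof (vnorm_pos u); pose proof (vnorm_pos v); lra.
  rewrite dot_add_l, !dot_add_r. rewrite (dot_sym v u).
  pose proof (dot_abs_le u v). pose proof (Rle_abs (dot N u v)). rewrite <- !vnorm_sq. nra. Qed.

Lemma vnorm_scal c u : vnorm N (vscal c u) = Rabs c * vnorm N u.
Proof. unfold vnorm. rewrite dot_scal_l, dot_scal_r. replace (c * (c * dot N u u)) with (Rsqr c * dot N u u) by (unfold Rsqr; ring).
  rewrite sqrt_mult_alt by apply Rle_0_sqr. rewrite sqrt_Rsqr_abs. reflexivity. Qed.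

Lemma coord_le_vnorm u i : (i < N)%nat -> Rabs (u i) <= vnorm N u.
Proof. intros Hi. apply abs_le_of_sq. apply vnorm_pos. rewrite vnorm_sq. unfold dot.
  apply (term_le_sum N (fun i => u i * u i)); auto. intros; nra. Qed.

Lemma sumsq_le n u : sumN n (fun i => u i * u i) <= sumN n (fun i => Rabs (u i)) * sumN n (fun i => Rabs (u i)).
Proof. induction n; simpl; [lra|]. assert (0 <= sumN n (fun i => Rabs (u i))) by (apply sumN_nonneg; intros; apply Rabs_pos).
  pose proof (Rabs_pos (u n)). replace (u n * u n) with (Rabs (u n) * Rabs (u n)). nra.
  rewrite <- Rabs_mult. apply Rabs_pos_eq. nra. Qed.

Lemma vnorm_le_sumabs u : vnorm N u <= sumN N (fun i => Rabs (u i)).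
Proof. apply vnorm_le_sq. apply sumN_nonneg; intros; apply Rabs_pos. apply sumsq_le. Qed.

Lemma vnorm_vsum n F : vnorm N (vsum n F) <= sumN n (fun j => vnorm N (F j)).
Proof. induction n; simpl.
  - rewrite (vnorm_ext _ (fun _ => 0)). unfold vnorm, dot. rewrite sumN_zero. rewrite sqrt_0; lra. intros; ring. intros; reflexivity.
  - rewrite (vnorm_ext _ (vadd (vsum n F) (F n))) by (intros; reflexivity).
    eapply Rle_trans. apply vnorm_triang. lra. Qed.

Lemma vnorm_sub u v : vnorm N (vsub u v) <= vnorm N u + vnorm N v.
Proof. rewrite (vnorm_ext _ (vadd u (vscal (-1) v))) by (intros; unfold vsub, vadd, vscal; ring).
  eapply Rle_trans. apply vnorm_triang. rewrite vnorm_scal. replace (Rabs (-1)) with 1. lra. rewrite Rabs_left; lra. Qed.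

Lemma vnorm_rev u v : vnorm N u - vnorm N v <= vnorm N (vsub u v).
Proof. rewrite (vnorm_ext u (vadd (vsub u v) v)) by (intros; unfold vsub, vadd; ring).
  pose proof (vnorm_triang (vsub u v) v). lra. Qed.

Lemma vnorm_zero_iff u : vnorm N u = 0 -> forall i, (i < N)%nat -> u i = 0.
Proof. intros H. apply dot_zero_coord. rewrite <- vnorm_sq, H. ring. Qed.

Lemma vnorm_nonzero u : Defs.nonzero N u -> 0 < vnorm N u.
Proof. intros H. apply nonzero_dot in H. unfold vnorm. apply sqrt_lt_R0. auto. Qed.

End Vecs.

Definition mvT (N : nat) (A : Mat) (z : Vec) : Vec := fun j => sumN N (fun i => A i j * z i).

Section Mats.
Variable N : nat.

Lemma mv_add A u v : mv N A (vadd u v) = vadd (mv N A u) (mv N A v).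
Proof. extensionality i. unfold mv, vadd. rewrite <- sumN_plus. apply sumN_ext; intros; ring. Qed.
Lemma mv_sub A u v : mv N A (vsub u v) = vsub (mv N A u) (mv N A v).
Proof. extensionality i. unfold mv, vsub. rewrite <- sumN_minus. apply sumN_ext; intros; ring. Qed.
Lemma mv_scal A c u : mv N A (vscal c u) = vscal c (mv N A u).
Proof. extensionality i. unfold mv, vscal. rewrite <- sumN_scal. apply sumN_ext; intros; ring. Qed.
Lemma mv_ext A u v : (forall i, (i < N)%nat -> u i = v i) -> mv N A u = mv N A v.
Proof. intros H. extensionality i. unfold mv. apply sumN_ext; intros. rewrite H; auto. Qed.
Lemma mv_zero A u : (forall i, (i < N)%nat -> u i = 0) -> forall i, mv N A u i = 0.
Proof. intros H i. unfold mv. apply sumN_zero. intros j Hj. rewrite H; auto; ring. Qed.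

Lemma mv_cols A y : mv N A y = vsum N (fun j => vscal (y j) (mv N A (ev j))).
Proof. extensionality i. unfold vsum, vscal, mv. apply sumN_ext. intros j Hj.
  rewrite (sumN_single N j); auto. unfold ev. rewrite Nat.eqb_refl. ring.
  intros l _ Hl. unfold ev. apply Nat.eqb_neq in Hl. rewrite Hl. ring. Qed.

Lemma mv_bound A y : vnorm N (mv N A y) <= vnorm N y * sumN N (fun j => vnorm N (mv N A (ev j))).
Proof. rewrite mv_cols. eapply Rle_trans. apply vnorm_vsum. rewrite <- sumN_scal. apply sumN_le.
  intros j Hj. rewrite vnorm_scal. apply Rmult_le_compat_r. apply vnorm_pos. apply coord_le_vnorm; auto. Qed.

Lemma mvT_adj A y z : dot N (mv N A y) z = dot N y (mvT N A z).
Proof. unfold dot, mv, mvT. rewrite <- (sumN_ext N (fun i => sumN N (fun j => A i j * y j * z i))).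
  2:{ intros. rewrite <- sumN_scal_r. reflexivity. }
  rewrite sumN_swap. apply sumN_ext. intros. rewrite <- sumN_scal. apply sumN_ext; intros; ring. Qed.

Lemma mm_mv A B y : mv N (mm N A B) y = mv N A (mv N B y).
Proof. extensionality i. unfold mv, mm.
  rewrite (sumN_ext N (fun j => sumN N (fun l => A i l * B l j) * y j) (fun j => sumN N (fun l => A i l * B l j * y j)))
    by (intros; rewrite <- sumN_scal_r; reflexivity).
  rewrite sumN_swap. apply sumN_ext. intros. rewrite <- sumN_scal. apply sumN_ext; intros; ring. Qed.

Lemma idm_mv y i : (i < N)%nat -> mv N idm y i = y i.
Proof. intros Hi. unfold mv. rewrite (sumN_single N i); auto. unfold idm. rewrite Nat.eqb_refl. ring.
  intros j _ Hj. unfold idm. assert (Nat.eqb i j = false) by (apply Nat.eqb_neq; auto). rewrite H. ring. Qed.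

Lemma inv_mv A : invertible N A -> exists B : Mat,
  (forall y i, (i < N)%nat -> mv N A (mv N B y) i = y i) /\ (forall y i, (i < N)%nat -> mv N B (mv N A y) i = y i).
Proof. intros [B HB]. exists B. split; intros y i Hi.
  - rewrite <- mm_mv. rewrite <- (idm_mv y i Hi). unfold mv. apply sumN_ext. intros. rewrite (proj1 (HB i i0 Hi H)). reflexivity.
  - rewrite <- mm_mv. rewrite <- (idm_mv y i Hi). unfold mv. apply sumN_ext. intros. rewrite (proj2 (HB i i0 Hi H)). reflexivity. Qed.

Lemma inv_nonzero A y : invertible N A -> Defs.nonzero N y -> Defs.nonzero N (mv N A y).
Proof. intros HA [i [Hi Hy]]. destruct (inv_mv A HA) as [B [_ HB]].
  destruct (Classical_Prop.classic (Defs.nonzero N (mv N A y))) as [|Hn]; auto. exfalso.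
  apply Hy. rewrite <- (HB y i Hi). apply mv_zero. intros j Hj. destruct (Req_dec (mv N A y j) 0); auto. exfalso; apply Hn; exists j; auto. Qed.

Lemma pdist_sq z x : 0 < dot N z z -> 0 < dot N x x ->
  pdist N z x * pdist N z x = 1 - (dot N z x)^2 / (dot N z z * dot N x x).
Proof. intros Hz Hx. unfold pdist. apply sqrt_sqrt. pose proof (CS N z x).
  assert ((dot N z x)^2 / (dot N z z * dot N x x) <= 1). { apply Rmult_le_reg_r with (dot N z z * dot N x x). nra.
  unfold Rdiv. rewrite Rmult_assoc, Rinv_l by nra. lra. } lra. Qed.

Lemma pdist_pos z x : 0 <= pdist N z x.
Proof. apply sqrt_pos. Qed.

Lemma pdist_ext z z' x x' : (forall i, (i < N)%nat -> z i = z' i) -> (forall i, (i < N)%nat -> x i = x' i) -> pdist N z x = pdist N z' x'.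
Proof. intros H1 H2. unfold pdist. rewrite (dot_ext N z z' x x'), (dot_ext N z z' z z'), (dot_ext N x x' x x'); auto. Qed.

Lemma pdist_refl x : 0 < dot N x x -> pdist N x x = 0.
Proof. intros H. unfold pdist. replace (1 - dot N x x ^ 2 / (dot N x x * dot N x x)) with 0. apply sqrt_0. field. lra. Qed.

Lemma pdist_scal c z x : c <> 0 -> pdist N (vscal c z) x = pdist N z x.
Proof. intros Hc. unfold pdist. rewrite dot_scal_l, dot_scal_r, dot_scal_l.
  destruct (Req_dec (dot N z z) 0) as [E|E].
  - rewrite E. f_equal. rewrite !Rmult_0_r, !Rmult_0_l. unfold Rdiv. rewrite Rinv_0. ring.
  - destruct (Req_dec (dot N x x) 0) as [E2|E2].
    + rewrite E2. rewrite !Rmult_0_r. unfold Rdiv. rewrite Rinv_0. f_equal; ring.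
    + f_equal. field. auto. Qed.

Lemma pdist_scal_r c z x : c <> 0 -> pdist N z (vscal c x) = pdist N z x.
Proof. intros Hc. unfold pdist. rewrite dot_scal_l, dot_scal_r, dot_scal_r.
  destruct (Req_dec (dot N z z) 0) as [E|E].
  - rewrite E. f_equal. rewrite !Rmult_0_l. unfold Rdiv. rewrite Rinv_0. ring.
  - destruct (Req_dec (dot N x x) 0) as [E2|E2].
    + rewrite E2. rewrite !Rmult_0_r. unfold Rdiv. rewrite Rinv_0. f_equal; ring.
    + f_equal. field. auto. Qed.

Lemma pdist_L1 z x t : 0 < dot N z z -> 0 < dot N x x -> pdist N z x * vnorm N z <= vnorm N (vsub z (vscal t x)).
Proof. intros Hz Hx. apply vnorm_ge_sq. apply Rmult_le_pos; [apply pdist_pos|apply vnorm_pos].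
  replace (pdist N z x * vnorm N z * (pdist N z x * vnorm N z)) with ((pdist N z x * pdist N z x) * (vnorm N z * vnorm N z)) by ring.
  rewrite pdist_sq, vnorm_sq by auto.
  rewrite dot_sub_l, !dot_sub_r, !dot_scal_l, !dot_scal_r. rewrite (dot_sym N x z).
  replace ((1 - dot N z x ^ 2 / (dot N z z * dot N x x)) * dot N z z) with (dot N z z - dot N z x ^ 2 / dot N x x) by (field; lra).
  assert (0 <= (t * dot N x x - dot N z x)^2 / dot N x x) by (apply Rmult_le_pos; [apply pow2_ge_0| left; apply Rinv_0_lt_compat; lra]).
  replace ((t * dot N x x - dot N z x) ^ 2 / dot N x x) with (t * t * dot N x x - 2 * t * dot N z x + dot N z x ^2 / dot N x x) in H by (field; lra).
  lra. Qed.

Lemma pdist_L2 u x : 0 < dot N u u -> 0 < dot N x x ->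
  vnorm N (vsub u (vscal (dot N u x / dot N x x) x)) <= pdist N u x * vnorm N u.
Proof. intros Hu Hx. apply vnorm_le_sq. apply Rmult_le_pos; [apply pdist_pos|apply vnorm_pos].
  replace (pdist N u x * vnorm N u * (pdist N u x * vnorm N u)) with ((pdist N u x * pdist N u x) * (vnorm N u * vnorm N u)) by ring.
  rewrite pdist_sq, vnorm_sq by auto.
  rewrite dot_sub_l, !dot_sub_r, !dot_scal_l, !dot_scal_r. rewrite (dot_sym N x u).
  right. field. lra. Qed.

Lemma pdist_L3 z u x : 0 < dot N z z -> 0 < dot N u u -> 0 < dot N x x -> dot N z u = 0 ->
  1 - pdist N u x * pdist N u x <= pdist N z x * pdist N z x.
Proof. intros Hz Hu Hx Hzu. rewrite !pdist_sq by auto.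
  set (w := vsub x (vscal (dot N x u / dot N u u) u)).
  assert (E: dot N z x = dot N z w). { unfold w. rewrite dot_sub_r, dot_scal_r, Hzu. ring. }
  assert (E2: dot N w w = dot N x x - (dot N u x)^2 / dot N u u).
  { unfold w. rewrite dot_sub_l, !dot_sub_r, !dot_scal_l, !dot_scal_r. rewrite (dot_sym N u x). field. lra. }
  pose proof (CS N z w). rewrite <- E, E2 in H.
  assert (dot N z x ^ 2 / (dot N z z * dot N x x) <= 1 - dot N u x ^ 2 / (dot N u u * dot N x x)).
  { apply Rmult_le_reg_r with (dot N z z * dot N x x). nra. unfold Rdiv. rewrite Rmult_assoc, Rinv_l by nra.
    replace ((1 - dot N u x ^ 2 * / (dot N u u * dot N x x)) * (dot N z z * dot N x x)) with
       (dot N z z * (dot N x x - dot N u x ^ 2 / dot N u u)) by (field; lra). lra. }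
  lra. Qed.

Lemma chart_cont a y ys : 0 < dot N y y -> 0 < dot N ys ys ->
  vnorm N y * ((1 - pdist N y ys * pdist N y ys) * Rabs (dot N a ys) / vnorm N ys - vnorm N a * pdist N y ys) <= Rabs (dot N a y).
Proof. intros Hy Hs. set (t := dot N y ys / dot N ys ys). set (r := vsub y (vscal t ys)).
  assert (Hr : vnorm N r <= pdist N y ys * vnorm N y) by (apply pdist_L2; auto).
  assert (Ey : dot N a y = t * dot N a ys + dot N a r).
  { unfold r. rewrite dot_sub_r, dot_scal_r. ring. }
  set (pd := pdist N y ys). assert (Hpd := pdist_sq y ys Hy Hs). fold pd in Hpd, Hr.
  assert (0 <= pd) by apply pdist_pos.
  assert (Hny := vnorm_sq N y). assert (Hns := vnorm_sq N ys).
  assert (0 < vnorm N ys) by (unfold vnorm; apply sqrt_lt_R0; auto).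
  assert (0 < vnorm N y) by (unfold vnorm; apply sqrt_lt_R0; auto).
  assert (Ht2 : (t * vnorm N ys) * (t * vnorm N ys) = vnorm N y * vnorm N y * (1 - pd * pd)).
  { rewrite Hpd. replace (t * vnorm N ys * (t * vnorm N ys)) with (t * t * (vnorm N ys * vnorm N ys)) by ring.
    rewrite Hny, Hns. unfold t. field. lra. }
  assert (0 <= 1 - pd * pd) by (pose proof (Rle_0_sqr (t * vnorm N ys)); unfold Rsqr in *; nra).
  assert (Ht : vnorm N y * (1 - pd * pd) <= Rabs t * vnorm N ys).
  { assert (Rabs t * Rabs t = t * t) by (rewrite <- Rabs_mult; apply Rabs_pos_eq; nra).
    assert (0 <= Rabs t) by apply Rabs_pos.
    assert (HB : (Rabs t * vnorm N ys) * (Rabs t * vnorm N ys) >= (vnorm N y * (1 - pd * pd)) * (vnorm N y * (1 - pd * pd))).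
    { replace ((Rabs t * vnorm N ys) * (Rabs t * vnorm N ys)) with ((t * vnorm N ys) * (t * vnorm N ys)) by nra.
      rewrite Ht2. assert (0 <= pd * pd) by nra. 
      assert ((1 - pd * pd) * (1 - pd * pd) <= 1 - pd * pd) by nra.
      assert (0 <= vnorm N y * vnorm N y) by nra. nra. }
    assert (0 <= Rabs t * vnorm N ys) by nra. assert (0 <= vnorm N y * (1 - pd * pd)) by nra. nra. }
  assert (Har : Rabs (dot N a r) <= vnorm N a * (pd * vnorm N y)).
  { eapply Rle_trans. apply dot_abs_le. apply Rmult_le_compat_l. apply vnorm_pos. auto. }
  assert (Htt : Rabs t * Rabs (dot N a ys) - Rabs (dot N a r) <= Rabs (dot N a y)).
  { rewrite Ey. rewrite <- Rabs_mult. pose proof (Rabs_triang_inv (t * dot N a ys) (- dot N a r)).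
    rewrite Rabs_Ropp in H3. replace (t * dot N a ys - - dot N a r) with (t * dot N a ys + dot N a r) in H3 by ring. lra. }
  assert (vnorm N y * (1 - pd * pd) * Rabs (dot N a ys) / vnorm N ys <= Rabs t * Rabs (dot N a ys)).
  { unfold Rdiv. apply Rmult_le_reg_r with (vnorm N ys); auto. rewrite Rmult_assoc, Rinv_l by lra.
    pose proof (Rabs_pos (dot N a ys)). nra. }
  assert (vnorm N y * ((1 - pd * pd) * Rabs (dot N a ys) / vnorm N ys - vnorm N a * pd) =
     vnorm N y * (1 - pd * pd) * Rabs (dot N a ys) / vnorm N ys - vnorm N a * (pd * vnorm N y)) by (field; lra).
  lra.
Qed.
End Mats.

Definition EB (f : nat -> R) : Prop := exists C k0, forall k, (k0 <= k)%nat -> Rabs (f k) <= C.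
Definition cv0 (f : nat -> R) : Prop := forall eps, 0 < eps -> exists k0, forall k, (k0 <= k)%nat -> Rabs (f k) < eps.

Lemma cv0_Un_cv f : cv0 f <-> Un_cv f 0.
Proof. split; intros H eps He; destruct (H eps He) as [k0 Hk]; exists k0; intros k Hk'.
  - unfold Rdist. rewrite Rminus_0_r. apply Hk; lia.
  - specialize (Hk k Hk'). unfold Rdist in Hk. rewrite Rminus_0_r in Hk. auto. Qed.

Lemma cv0_le f g : cv0 g -> (exists k0, forall k, (k0 <= k)%nat -> Rabs (f k) <= Rabs (g k)) -> cv0 f.
Proof. intros Hg [k1 H] eps He. destruct (Hg eps He) as [k0 Hk]. exists (max k0 k1). intros k Hk'.
  eapply Rle_lt_trans. apply H; lia. apply Hk; lia. Qed.

Lemma cv0_plus f g : cv0 f -> cv0 g -> cv0 (fun k => f k + g k).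
Proof. intros Hf Hg eps He. destruct (Hf (eps/2)) as [k0 H0]; [lra|]. destruct (Hg (eps/2)) as [k1 H1]; [lra|].
  exists (max k0 k1). intros k Hk. eapply Rle_lt_trans. apply Rabs_triang.
  assert (Rabs (f k) < eps/2) by (apply H0; lia). assert (Rabs (g k) < eps/2) by (apply H1; lia). lra. Qed.

Lemma cv0_mult_EB f g : cv0 f -> EB g -> cv0 (fun k => f k * g k).
Proof. intros Hf [C [k1 Hg]] eps He.
  assert (0 < Rabs C + 1) by (pose proof (Rabs_pos C); lra).
  assert (He' : 0 < eps / (Rabs C + 1)) by (unfold Rdiv; apply Rmult_lt_0_compat; [lra| apply Rinv_0_lt_compat; lra]).
  destruct (Hf _ He') as [k0 H0].
  exists (max k0 k1). intros k Hk. rewrite Rabs_mult.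
  assert (Rabs (f k) < eps / (Rabs C + 1)) by (apply H0; lia).
  assert (Rabs (g k) <= Rabs C + 1) by (specialize (Hg k ltac:(lia)); pose proof (Rle_abs C); lra).
  pose proof (Rabs_pos (f k)). pose proof (Rabs_pos (g k)).
  apply Rle_lt_trans with (Rabs (f k) * (Rabs C + 1)). nra.
  replace eps with (eps / (Rabs C + 1) * (Rabs C + 1)) by (field; lra). nra. Qed.

Lemma cv0_const_mult c f : cv0 f -> cv0 (fun k => c * f k).
Proof. intros H. apply (cv0_le _ (fun k => f k * c)). apply cv0_mult_EB; auto. exists (Rabs c), 0%nat; intros; lra.
  exists 0%nat. intros. rewrite Rmult_comm. lra. Qed.

Lemma cv0_sumN n (F : nat -> nat -> R) : (forall j, (j < n)%nat -> cv0 (fun k => F k j)) -> cv0 (fun k => sumN n (F k)).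
Proof. induction n; intros H; simpl.
  - intros eps He. exists 0%nat. intros. rewrite Rabs_R0. auto.
  - apply (cv0_plus (fun k => sumN n (F k)) (fun k => F k n)). apply IHn. intros; apply H; lia. apply H; lia. Qed.

Lemma EB_plus f g : EB f -> EB g -> EB (fun k => f k + g k).
Proof. intros [C1 [k1 H1]] [C2 [k2 H2]]. exists (C1 + C2), (max k1 k2). intros k Hk.
  eapply Rle_trans. apply Rabs_triang. specialize (H1 k ltac:(lia)). specialize (H2 k ltac:(lia)). lra. Qed.

Lemma EB_mult f g : EB f -> EB g -> EB (fun k => f k * g k).
Proof. intros [C1 [k1 H1]] [C2 [k2 H2]]. exists (C1 * C2), (max k1 k2). intros k Hk.
  rewrite Rabs_mult. specialize (H1 k ltac:(lia)). specialize (H2 k ltac:(lia)).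
  pose proof (Rabs_pos (f k)). pose proof (Rabs_pos (g k)). apply Rmult_le_compat; auto. Qed.

Lemma EB_const c : EB (fun _ => c).
Proof. exists (Rabs c), 0%nat. intros; lra. Qed.

Lemma EB_le f g : EB g -> (exists k0, forall k, (k0 <= k)%nat -> Rabs (f k) <= Rabs (g k)) -> EB f.
Proof. intros [C [k1 H1]] [k0 H]. exists C, (max k0 k1). intros k Hk. eapply Rle_trans. apply H; lia. apply H1; lia. Qed.

Lemma cv0_EB f : cv0 f -> EB f.
Proof. intros H. destruct (H 1) as [k0 Hk]. lra. exists 1, k0. intros. left; auto. Qed.

Lemma EB_sumN n (F : nat -> nat -> R) : (forall j, (j < n)%nat -> EB (fun k => F k j)) -> EB (fun k => sumN n (F k)).
Proof. induction n; intros H; simpl.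
  - apply EB_const.
  - apply (EB_plus (fun k => sumN n (F k)) (fun k => F k n)). apply IHn. intros; apply H; lia. apply H; lia. Qed.

Lemma EB_abs f : EB f -> EB (fun k => Rabs (f k)).
Proof. intros H. apply (EB_le _ f H). exists 0%nat. intros. rewrite Rabs_Rabsolu. lra. Qed.

Lemma strict_incr_ge phi : strict_incr phi -> forall k, (k <= phi k)%nat.
Proof. intros H k. induction k. lia. specialize (H k). lia. Qed.

Lemma strict_incr_mono phi : strict_incr phi -> forall a b, (a <= b)%nat -> (phi a <= phi b)%nat.
Proof. intros H a b Hab. induction Hab. lia. specialize (H m). lia. Qed.

Lemma strict_incr_lt phi : strict_incr phi -> forall a b, (a < b)%nat -> (phi a < phi b)%nat.
Proof. intros H a b Hab. pose proof (strict_incr_mono phi H (S a) b Hab). specialize (H a). lia. Qed.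

Lemma strict_incr_comp phi psi : strict_incr phi -> strict_incr psi -> strict_incr (fun k => phi (psi k)).
Proof. intros H1 H2 k. apply strict_incr_lt; auto. Qed.

Lemma Un_cv_sub f l phi : strict_incr phi -> Un_cv f l -> Un_cv (fun k => f (phi k)) l.
Proof. intros Hp H eps He. destruct (H eps He) as [k0 Hk]. exists k0. intros k Hk'. apply Hk.
  pose proof (strict_incr_ge phi Hp k). lia. Qed.

Lemma cv0_sub f phi : strict_incr phi -> cv0 f -> cv0 (fun k => f (phi k)).
Proof. intros Hp H. apply (proj2 (cv0_Un_cv _)). apply Un_cv_sub; auto. apply (proj1 (cv0_Un_cv _)); auto. Qed.

Lemma EB_sub f phi : strict_incr phi -> EB f -> EB (fun k => f (phi k)).
Proof. intros Hp [C [k0 H]]. exists C, k0. intros k Hk. apply H. pose proof (strict_incr_ge phi Hp k). lia. Qed.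

Lemma BW1 f : EB f -> exists phi l, strict_incr phi /\ Un_cv (fun k => f (phi k)) l.
Proof. intros [C [k0 H]].
  set (g := fun k => f (k + k0)%nat).
  destruct (Bolzano_Weierstrass g (fun c => -C <= c <= C) (compact_P3 (-C) C)) as [l Hl].
  { intros n. unfold g. specialize (H (n + k0)%nat ltac:(lia)). unfold Rabs in H. destruct (Rcase_abs (f (n + k0)%nat)); lra. }
  assert (Hc : forall m n0 : nat, {p | (n0 <= p)%nat /\ Rabs (g p - l) < / (INR m + 1)}).
  { intros m n0. apply constructive_indefinite_description.
    assert (Hpos : 0 < / (INR m + 1)) by (apply Rinv_0_lt_compat; pose proof (pos_INR m); lra).
    destruct (Hl (disc l (mkposreal _ Hpos)) n0) as [p [Hp1 Hp2]].
    - exists (mkposreal _ Hpos). intros y Hy. exact Hy.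
    - exists p. split; auto. }
  set (psi := fix psi m := match m with O => proj1_sig (Hc O O) | S m' => proj1_sig (Hc (S m') (S (psi m'))) end).
  assert (Hpsi : forall m, Rabs (g (psi m) - l) < / (INR m + 1)).
  { intros [|m]; simpl. exact (proj2 (proj2_sig (Hc 0%nat 0%nat))). exact (proj2 (proj2_sig (Hc (S m) (S (psi m))))). }
  assert (Hinc : strict_incr psi).
  { intros m. simpl. exact (proj1 (proj2_sig (Hc (S m) (S (psi m))))). }
  exists (fun k => (psi k + k0)%nat), l. split.
  - intros k. specialize (Hinc k). lia.
  - intros eps He. destruct (archimed (/ eps)) as [Ha _].
    destruct (INR_unbounded (/ eps)) as [M HM].
    exists M. intros k Hk. unfold Rdist. eapply Rlt_trans. apply (Hpsi k).
    assert (INR M <= INR k) by (apply le_INR; lia).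
    assert (0 < / eps) by (apply Rinv_0_lt_compat; lra).
    rewrite <- (Rinv_inv eps). apply Rinv_lt_contravar. nra. lra. Qed.

Lemma BWn n (a : nat -> Vec) : (forall i, (i < n)%nat -> EB (fun k => a k i)) ->
  exists phi l, strict_incr phi /\ forall i, (i < n)%nat -> Un_cv (fun k => a (phi k) i) (l i).
Proof. induction n; intros H.
  - exists (fun k => k), (fun _ => 0). split. intros k; lia. intros; lia.
  - destruct IHn as [phi [l [Hphi Hl]]]; [intros; apply H; lia|].
    destruct (BW1 (fun k => a (phi k) n)) as [psi [ln [Hpsi Hln]]]; [apply (EB_sub (fun k => a k n) phi Hphi); apply H; lia|].
    exists (fun k => phi (psi k)), (fun i => if Nat.eqb i n then ln else l i). split.
    + apply strict_incr_comp; auto.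
    + intros i Hi. destruct (Nat.eqb_spec i n).
      * subst. exact Hln.
      * apply (Un_cv_sub (fun k => a (phi k) i)); auto. apply Hl. lia. Qed.

Lemma dot_vsum N n w F : dot N w (vsum n F) = sumN n (fun j => dot N w (F j)).
Proof. unfold dot, vsum. rewrite <- (sumN_ext N (fun i => sumN n (fun j => w i * F j i))).
  rewrite sumN_swap. reflexivity. intros. rewrite <- sumN_scal. reflexivity. Qed.

Section Frame.
Variable N : nat.
Variable g : nat -> Mat.
Variable x : Vec.
Hypothesis Hinv : forall k, invertible N (g k).
Hypothesis Hx : 0 < dot N x x.

Definition cc k := vnorm N (mv N (g k) x).
Definition Bk k y := vscal (/ cc k) (mv N (g k) y).
Definition uu k := Bk k x.
Definition Fk k y := vsub (Bk k y) (vscal (dot N (uu k) (Bk k y)) (uu k)).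
Definition ak k := vscal (/ cc k) (mvT N (g k) (uu k)).

Lemma x_nonzero : Defs.nonzero N x.
Proof. destruct (Classical_Prop.classic (Defs.nonzero N x)) as [|Hn]; auto. exfalso.
  assert (dot N x x = 0). { unfold dot. apply sumN_zero. intros i Hi. destruct (Req_dec (x i) 0) as [E|E]. rewrite E; ring. exfalso; apply Hn; exists i; auto. } lra. Qed.

Lemma cc_pos k : 0 < cc k.
Proof. unfold cc. apply vnorm_nonzero. apply inv_nonzero; auto. apply x_nonzero. Qed.

Lemma uu_unit k : dot N (uu k) (uu k) = 1.
Proof. unfold uu, Bk. rewrite dot_scal_l, dot_scal_r. rewrite <- vnorm_sq. fold (cc k). pose proof (cc_pos k). field. lra. Qed.

Lemma vnorm_uu k : vnorm N (uu k) = 1.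
Proof. unfold vnorm. rewrite uu_unit. apply sqrt_1. Qed.

Lemma Bk_add k y z : Bk k (vadd y z) = vadd (Bk k y) (Bk k z).
Proof. unfold Bk. rewrite mv_add. extensionality i. unfold vscal, vadd. ring. Qed.
Lemma Bk_sub k y z : Bk k (vsub y z) = vsub (Bk k y) (Bk k z).
Proof. unfold Bk. rewrite mv_sub. extensionality i. unfold vscal, vsub. ring. Qed.
Lemma Bk_scal k c y : Bk k (vscal c y) = vscal c (Bk k y).
Proof. unfold Bk. rewrite mv_scal. extensionality i. unfold vscal. ring. Qed.
Lemma Bk_ext k y z : (forall i, (i < N)%nat -> y i = z i) -> Bk k y = Bk k z.
Proof. intros H. unfold Bk. rewrite (mv_ext N (g k) y z H). reflexivity. Qed.

Lemma Bk_cols k y : Bk k y = vsum N (fun j => vscal (y j) (Bk k (ev j))).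
Proof. unfold Bk. rewrite mv_cols. extensionality i. unfold vscal, vsum. rewrite <- sumN_scal. apply sumN_ext. intros; ring. Qed.

Lemma ak_dot k y : dot N (ak k) y = dot N (uu k) (Bk k y).
Proof. unfold ak, Bk. rewrite dot_scal_l, dot_scal_r. rewrite (dot_sym N (uu k)), mvT_adj, dot_sym. reflexivity. Qed.

Lemma Bk_decomp k y : Bk k y = vadd (vscal (dot N (ak k) y) (uu k)) (Fk k y).
Proof. unfold Fk. rewrite ak_dot. extensionality i. unfold vadd, vsub, vscal. ring. Qed.

Lemma Fk_cols k y : Fk k y = vsum N (fun j => vscal (y j) (Fk k (ev j))).
Proof. unfold Fk. rewrite (Bk_cols k y) at 1 2. rewrite dot_vsum. extensionality i.
  match goal with |- ?L = ?R => change (L = sumN N (fun j => (vscal (y j) (Fk k (ev j))) i)) end.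
  unfold vsub at 1. unfold vsum at 1. unfold vscal at 1.
  unfold vscal at 1. rewrite <- sumN_scal_r, <- sumN_minus.
  apply sumN_ext. intros j Hj. rewrite dot_scal_r. unfold Fk, vsub, vscal. ring. Qed.

Definition rho k := sumN N (fun j => vnorm N (Fk k (ev j))).

Lemma Fk_bound k y : vnorm N (Fk k y) <= vnorm N y * rho k.
Proof. rewrite Fk_cols. eapply Rle_trans. apply vnorm_vsum. unfold rho. rewrite <- sumN_scal. apply sumN_le.
  intros j Hj. rewrite vnorm_scal. apply Rmult_le_compat_r. apply vnorm_pos. apply coord_le_vnorm; auto. Qed.

Lemma dnorm_Fk k v : dnorm N (g k) x v = vnorm N (Fk k v).
Proof. unfold dnorm, Fk, uu, Bk. fold (cc k). pose proof (cc_pos k).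
  rewrite !dot_scal_l, !dot_scal_r.
  set (Av := mv N (g k) v). set (Ax := mv N (g k) x).
  assert (Hc : dot N Ax Ax = cc k * cc k) by (unfold cc; rewrite vnorm_sq; reflexivity).
  assert (E : vnorm N (vsub (vscal (/ cc k) Av) (vscal (/ cc k * (/ cc k * dot N Ax Av)) (vscal (/ cc k) Ax)))
     = / cc k * vnorm N (fun i => Av i - dot N Av Ax / dot N Ax Ax * Ax i)).
  { transitivity (vnorm N (vscal (/ cc k) (fun i => Av i - dot N Av Ax / dot N Ax Ax * Ax i))).
    apply vnorm_ext. intros i Hi. unfold vsub, vscal. rewrite Hc, (dot_sym N Ax Av). field. lra.
    rewrite vnorm_scal, Rabs_pos_eq. reflexivity. left; apply Rinv_0_lt_compat; auto. }
  rewrite E. unfold Rdiv. fold Ax. fold (cc k). ring. Qed.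

End Frame.

Lemma vnorm_add_rev N u v : vnorm N u - vnorm N v <= vnorm N (vadd u v).
Proof. pose proof (vnorm_sub N (vadd u v) v). rewrite (vnorm_ext N (vsub (vadd u v) v) u) in H by (intros; unfold vsub, vadd; ring). lra. Qed.

Lemma cv0_dist_coords N (a : nat -> Vec) (l : Vec) : (forall i, (i < N)%nat -> Un_cv (fun k => a k i) (l i)) ->
  cv0 (fun k => sumN N (fun i => Rabs (a k i - l i))).
Proof. intros H. apply cv0_sumN. intros j Hj. intros eps He. destruct (H j Hj eps He) as [k0 Hk]. exists k0. intros k Hk'.
  rewrite Rabs_Rabsolu. apply Hk. lia. Qed.

Lemma inv_INR_small eps : 0 < eps -> exists m, forall k, (m <= k)%nat -> / (INR k + 1) < eps.
Proof. intros He. destruct (INR_unbounded (/ eps)) as [M HM]. exists M. intros k Hk.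
  assert (INR M <= INR k) by (apply le_INR; lia). assert (0 < / eps) by (apply Rinv_0_lt_compat; lra).
  rewrite <- (Rinv_inv eps). apply Rinv_lt_contravar. nra. lra. Qed.

Section Final.
Variable X : model.
Let N := mdim X.
Variable g : nat -> Mat.
Variable x : Vec.
Hypothesis Hinv : forall k, invertible N (g k).
Hypothesis Hx : 0 < dot N x x.

Notation B := (Bk N g x).
Notation u := (uu N g x).
Notation F := (Fk N g x).
Notation a_ := (ak N g x).

Lemma ak_coord_bound k i : (i < N)%nat -> Rabs (a_ k i) <= vnorm N (B k (ev i)).
Proof. intros Hi. rewrite <- (dot_ev N i (a_ k)) by auto. rewrite dot_sym, ak_dot.
  eapply Rle_trans. apply dot_abs_le. rewrite vnorm_uu; auto. lra. Qed.

Lemma final_core :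
  cv0 (fun k => pdist N (u k) x) ->
  (forall j, (j < N)%nat -> cv0 (fun k => vnorm N (F k (ev j)))) ->
  (forall j, (j < N)%nat -> EB (fun k => vnorm N (B k (ev j)))) ->
  exists phi a, strict_incr phi /\ (forall i, (i < N)%nat -> Un_cv (fun k => a_ (phi k) i) (a i)) /\ dot N a x = 1 /\
   forall K, compactX X K -> (exists y, K y) -> (forall y, K y -> dot N a y <> 0) ->
     hconv_point X (fun k z => exists y, K y /\ z = mv N (g (phi k)) y) x.
Proof.
  intros Hu HF HB.
  destruct (BWn N a_) as [phi [a [Hphi Ha]]].
  { intros i Hi. apply (EB_le _ (fun k => vnorm N (B k (ev i)))). apply HB; auto.
    exists 0%nat. intros k _. rewrite (Rabs_pos_eq (vnorm _ _)) by apply vnorm_pos. apply ak_coord_bound; auto. }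
  set (del := fun k => sumN N (fun i => Rabs (a_ (phi k) i - a i))).
  assert (Hdel : cv0 del) by (apply (cv0_dist_coords N (fun k => a_ (phi k)) a); auto).
  assert (Hdel_pos : forall k, 0 <= del k) by (intros; apply sumN_nonneg; intros; apply Rabs_pos).
  assert (Hdiff : forall k, vnorm N (vsub (a_ (phi k)) a) <= del k).
  { intros k. eapply Rle_trans. apply vnorm_le_sumabs. unfold del, vsub. right; reflexivity. }
  assert (Hdot : forall k y, Rabs (dot N (a_ (phi k)) y - dot N a y) <= del k * vnorm N y).
  { intros k y. rewrite <- dot_sub_l. eapply Rle_trans. apply dot_abs_le. apply Rmult_le_compat_r. apply vnorm_pos. auto. }
  assert (Hax : dot N a x = 1).
  { assert (E : forall k, dot N (a_ (phi k)) x = 1).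
    { intros k. rewrite ak_dot. unfold uu. apply uu_unit; auto. }
    destruct (Req_dec (dot N a x) 1) as [|Hne]; auto. exfalso.
    assert (Hp : 0 < Rabs (1 - dot N a x)) by (apply Rabs_pos_lt; lra).
    destruct (Hdel (Rabs (1 - dot N a x) / (vnorm N x + 1))) as [k0 Hk0].
    { apply Rdiv_lt_0_compat; auto. pose proof (vnorm_pos N x); lra. }
    specialize (Hk0 k0 (le_n _)). specialize (Hdot k0 x). rewrite E in Hdot.
    rewrite Rabs_pos_eq in Hk0 by auto. pose proof (vnorm_pos N x).
    assert (del k0 * vnorm N x < Rabs (1 - dot N a x)).
    { apply Rle_lt_trans with (del k0 * (vnorm N x + 1)). specialize (Hdel_pos k0). nra.
      apply Rmult_lt_reg_r with (/ (vnorm N x + 1)). apply Rinv_0_lt_compat; lra.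
      rewrite Rmult_assoc, Rinv_r by lra. unfold Rdiv in Hk0. lra. }
    lra. }
  exists phi, a. split; [auto|]. split; [auto|]. split; [auto|].
  intros K HK Hne Hchart.
  destruct HK as [Hpt Hseq].
  assert (Hnz : forall y, K y -> 0 < dot N y y).
  { intros y Ky. apply nonzero_dot. exact (proj1 (Hpt y Ky)). }
  assert (HC : exists c0, 0 < c0 /\ forall y, K y -> c0 * vnorm N y <= Rabs (dot N a y)).
  { apply NNPP. intros Hn.
    assert (Hm : forall m : nat, exists y, K y /\ Rabs (dot N a y) < / (INR m + 1) * vnorm N y).
    { intros m. apply NNPP. intros Hm. apply Hn. exists (/ (INR m + 1)). split.
      apply Rinv_0_lt_compat; pose proof (pos_INR m); lra.
      intros y Ky. apply Rnot_lt_le. intros Hlt. apply Hm. exists y. auto. }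
    set (ys := fun m => proj1_sig (constructive_indefinite_description _ (Hm m))).
    assert (Hys : forall m, K (ys m) /\ Rabs (dot N a (ys m)) < / (INR m + 1) * vnorm N (ys m)).
    { intros m. exact (proj2_sig (constructive_indefinite_description _ (Hm m))). }
    destruct (Hseq ys (fun m => proj1 (Hys m))) as [psi [y0 [Hpsi [Ky0 Hcv]]]].
    assert (Hy0 := Hnz y0 Ky0).
    assert (Hny0 : 0 < vnorm N y0) by (unfold vnorm; apply sqrt_lt_R0; auto).
    set (L := Rabs (dot N a y0) / vnorm N y0).
    assert (HL : 0 < L) by (apply Rdiv_lt_0_compat; auto; apply Rabs_pos_lt; auto).
    set (dl := Rmin (1/2) (L / (4 * (vnorm N a + 1)))).
    assert (Hna := vnorm_pos N a).
    assert (Hdl : 0 < dl) by (apply Rmin_pos; [lra| apply Rdiv_lt_0_compat; lra]).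
    destruct (Hcv dl Hdl) as [m0 Hm0].
    destruct (inv_INR_small (L/2)) as [m1 Hm1]; [lra|].
    set (m := max m0 m1).
    specialize (Hm0 m ltac:(unfold m; lia)). unfold Rdist in Hm0. rewrite Rminus_0_r in Hm0.
    rewrite Rabs_pos_eq in Hm0 by apply pdist_pos. change (pdist N (ys (psi m)) y0 < dl) in Hm0.
    assert (Hpm := strict_incr_ge psi Hpsi m).
    specialize (Hm1 (psi m) ltac:(unfold m in *; lia)).
    destruct (Hys (psi m)) as [Kym Hym].
    set (y := ys (psi m)) in *.
    assert (Hy := Hnz y Kym). assert (Hny : 0 < vnorm N y) by (unfold vnorm; apply sqrt_lt_R0; auto).
    pose proof (chart_cont N a y y0 Hy Hy0) as Hcc.
    set (pd := pdist N y y0) in *.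
    assert (Hpd0 : 0 <= pd) by apply pdist_pos.
    assert (Hdl1 : dl <= 1/2) by apply Rmin_l. assert (Hdl2 : dl <= L / (4 * (vnorm N a + 1))) by apply Rmin_r.
    assert (pd <= 1/2) by lra.
    assert (pd <= L / (4 * (vnorm N a + 1))) by lra.
    assert (Hin : L / 2 <= (1 - pd * pd) * Rabs (dot N a y0) / vnorm N y0 - vnorm N a * pd).
    { replace ((1 - pd * pd) * Rabs (dot N a y0) / vnorm N y0) with ((1 - pd * pd) * L) by (unfold L; field; lra).
      assert (vnorm N a * pd <= L / 4).
      { apply Rle_trans with (vnorm N a * (L / (4 * (vnorm N a + 1)))). apply Rmult_le_compat_l; lra.
        unfold Rdiv. rewrite Rinv_mult. 
        apply Rle_trans with (L * / 4 * (vnorm N a * / (vnorm N a + 1))). right; ring.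
        assert (vnorm N a * / (vnorm N a + 1) <= 1).
        { apply Rmult_le_reg_r with (vnorm N a + 1). lra. rewrite Rmult_assoc, Rinv_l by lra. lra. }
        nra. }
      assert (pd * pd <= 1/4) by nra. assert (pd * pd * L <= L / 4) by nra. nra. }
    assert (vnorm N y * (L / 2) < vnorm N y * / (INR (psi m) + 1)).
    { apply Rle_lt_trans with (Rabs (dot N a y)). apply Rle_trans with (vnorm N y * ((1 - pd * pd) * Rabs (dot N a y0) / vnorm N y0 - vnorm N a * pd)).
      apply Rmult_le_compat_l; lra. auto. rewrite Rmult_comm. auto. }
    assert (L / 2 < / (INR (psi m) + 1)) by (apply Rmult_lt_reg_l with (vnorm N y); auto).
    lra. }
  destruct HC as [c0 [Hc0 HC]].
  intros eps Heps.
  set (M := vnorm N a + 1).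
  assert (HM : 1 <= M) by (unfold M; pose proof (vnorm_pos N a); lra).
  set (eta := Rmin (c0 / 4) (eps * c0 / (4 * (M + 1)))).
  assert (Heta : 0 < eta) by (apply Rmin_pos; [lra| apply Rdiv_lt_0_compat; nra]).
  assert (Heta1 : eta <= c0 / 4) by apply Rmin_l.
  assert (Heta2 : eta <= eps * c0 / (4 * (M + 1))) by apply Rmin_r.
  assert (Hrho : cv0 (fun k => rho N g x (phi k))).
  { apply (cv0_sub (fun k => rho N g x k)); auto. unfold rho. apply cv0_sumN. intros j Hj.
    apply (cv0_le _ (fun k => vnorm N (F k (ev j)))). apply HF; auto. exists 0%nat. intros; lra. }
  assert (Hu' : cv0 (fun k => pdist N (u (phi k)) x)) by (apply (cv0_sub (fun k => pdist N (u k) x)); auto).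
  destruct (Hrho eta Heta) as [k1 Hk1].
  destruct (Hu' eta Heta) as [k2 Hk2].
  destruct (Hdel (Rmin eta 1)) as [k3 Hk3]. apply Rmin_pos; lra.
  assert (Hall : forall k, (max k1 (max k2 k3) <= k)%nat -> forall y, K y -> pdist N (mv N (g (phi k)) y) x < eps).
  { intros k Hk y Ky.
    specialize (Hk1 k ltac:(lia)). specialize (Hk2 k ltac:(lia)). specialize (Hk3 k ltac:(lia)).
    rewrite Rabs_pos_eq in Hk1 by (unfold rho; apply sumN_nonneg; intros; apply vnorm_pos).
    rewrite Rabs_pos_eq in Hk2 by apply pdist_pos. rewrite Rabs_pos_eq in Hk3 by auto.
    assert (Hk3a : del k < eta) by (pose proof (Rmin_l eta 1); lra).
    assert (Hk3b : del k < 1) by (pose proof (Rmin_r eta 1); lra).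
    set (kk := phi k) in *.
    set (r := rho N g x kk) in *. set (pdu := pdist N (u kk) x) in *.
    assert (Hr0 : 0 <= r) by (unfold r, rho; apply sumN_nonneg; intros; apply vnorm_pos).
    assert (Hpdu0 : 0 <= pdu) by apply pdist_pos.
    set (al := dot N (a_ kk) y).
    assert (Hy := Hnz y Ky). assert (Hny : 0 < vnorm N y) by (unfold vnorm; apply sqrt_lt_R0; auto).
    assert (Hal_lo : (c0 - del k) * vnorm N y <= Rabs al).
    { specialize (HC y Ky). specialize (Hdot k y). fold kk in Hdot. fold al in Hdot.
      pose proof (Rabs_triang_inv (dot N a y) (dot N a y - al)).
      replace (dot N a y - (dot N a y - al)) with al in H by ring. rewrite Rabs_minus_sym in H. nra. }
    assert (Hak : vnorm N (a_ kk) <= M).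
    { unfold M. pose proof (vnorm_sub N (a_ kk) (vsub (a_ kk) a)).
      pose proof (vnorm_rev N (a_ kk) a). pose proof (Hdiff k). fold kk in H1.
      pose proof (vnorm_sub N (vsub (a_ kk) a) (vscal (-1) a)).
      rewrite (vnorm_ext N (vsub (vsub (a_ kk) a) (vscal (-1) a)) (a_ kk)) in H2 by (intros; unfold vsub, vscal; ring).
      rewrite vnorm_scal in H2. replace (Rabs (-1)) with 1 in H2 by (rewrite Rabs_left; lra). lra. }
    assert (Hal_hi : Rabs al <= M * vnorm N y).
    { unfold al. eapply Rle_trans. apply dot_abs_le. apply Rmult_le_compat_r. apply vnorm_pos. auto. }
    assert (HBy : B kk y = vadd (vscal al (u kk)) (F kk y)) by (apply Bk_decomp).
    assert (HFy : vnorm N (F kk y) <= vnorm N y * r) by (apply Fk_bound).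
    assert (HBlo : (c0 / 2) * vnorm N y <= vnorm N (B kk y)).
    { rewrite HBy. pose proof (vnorm_add_rev N (vscal al (u kk)) (F kk y)). rewrite vnorm_scal, vnorm_uu in H; auto. nra. }
    assert (HBdot : 0 < dot N (B kk y) (B kk y)).
    { rewrite <- vnorm_sq. assert (0 < vnorm N (B kk y)) by nra. nra. }
    pose proof (pdist_L1 N (B kk y) x (al * (dot N (u kk) x / dot N x x)) HBdot Hx) as HL1.
    assert (Hsub : vnorm N (vsub (B kk y) (vscal (al * (dot N (u kk) x / dot N x x)) x)) <= M * vnorm N y * pdu + vnorm N y * r).
    { rewrite HBy. rewrite (vnorm_ext N _ (vadd (vscal al (vsub (u kk) (vscal (dot N (u kk) x / dot N x x) x))) (F kk y)))
        by (intros; unfold vadd, vsub, vscal; ring).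
      eapply Rle_trans. apply vnorm_triang. rewrite vnorm_scal.
      pose proof (pdist_L2 N (u kk) x ltac:(rewrite uu_unit; auto; lra) Hx). rewrite vnorm_uu in H; auto.
      pose proof (Rabs_pos al). pose proof (vnorm_pos N (vsub (u kk) (vscal (dot N (u kk) x / dot N x x) x))).
      fold pdu in H. apply Rplus_le_compat; [|auto]. nra. }
    assert (Hz : pdist N (mv N (g kk) y) x = pdist N (B kk y) x).
    { unfold Bk. rewrite pdist_scal. reflexivity. apply Rinv_neq_0_compat. pose proof (cc_pos N g x Hinv Hx kk). lra. }
    rewrite Hz.
    assert (Hpd : pdist N (B kk y) x * ((c0 / 2) * vnorm N y) <= M * vnorm N y * pdu + vnorm N y * r).
    { eapply Rle_trans; [|exact Hsub]. eapply Rle_trans; [|exact HL1]. apply Rmult_le_compat_l. apply pdist_pos. auto. }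
    assert (Hpd2 : pdist N (B kk y) x * (c0 / 2) <= M * pdu + r).
    { apply Rmult_le_reg_r with (vnorm N y); auto. nra. }
    assert (M * pdu + r <= (M + 1) * eta) by nra.
    assert ((M + 1) * eta <= eps * c0 / 4).
    { apply Rle_trans with ((M + 1) * (eps * c0 / (4 * (M + 1)))). apply Rmult_le_compat_l; lra. right; field; lra. }
    assert (pdist N (B kk y) x * (c0 / 2) < eps * (c0 / 2)) by nra.
    apply Rmult_lt_reg_r with (c0 / 2); lra. }
  exists (max k1 (max k2 k3)). intros k Hk. split.
  - intros z [y [Ky Hz]]. subst z. apply Hall; auto.
  - destruct Hne as [y Ky]. exists (mv N (g (phi k)) y). split. exists y; auto. apply Hall; auto.
Qed.
End Final.

Section Common.
Variable X : model.
Let N := mdim X.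
Variable g : nat -> Mat.
Variable T : nat -> R.
Variable x : Vec.
Hypothesis Hinv : forall k, invertible N (g k).
Hypothesis Hxp : is_point X x.
Hypothesis HT : forall k, 0 < T k.
Hypothesis HTi : cv_infty T.
Hypothesis H1 : forall xs : nat -> Vec, (forall k, is_point X (xs k)) -> pconv X xs x ->
     pconv X (fun k => mv N (g k) (xs k)) x.
Hypothesis H2 : forall v, is_tangent X x v ->
     Un_cv (fun k => / T k * ln (dnorm N (g k) x v)) (-1).

Lemma Hx : 0 < dot N x x.
Proof. apply nonzero_dot. exact (proj1 Hxp). Qed.

Notation B := (Bk N g x).
Notation u := (uu N g x).
Notation F := (Fk N g x).

Lemma unif1 eps : 0 < eps -> exists del k0, 0 < del /\ forall k y, (k0 <= k)%nat -> is_point X y -> pdist N y x < del ->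
   pdist N (mv N (g k) y) x < eps.
Proof. intros He. apply NNPP. intros Hn.
  assert (Hb : forall j k0 : nat, exists p : nat * Vec, (k0 <= fst p)%nat /\ is_point X (snd p) /\
      pdist N (snd p) x < / (INR j + 1) /\ eps <= pdist N (mv N (g (fst p)) (snd p)) x).
  { intros j k0. apply NNPP. intros Hj. apply Hn. exists (/ (INR j + 1)), k0. split.
    apply Rinv_0_lt_compat; pose proof (pos_INR j); lra.
    intros k y Hk Hy Hd. apply Rnot_le_lt. intros Hle. apply Hj. exists (k, y). simpl. auto. }
  set (Fc := fun j k0 => proj1_sig (constructive_indefinite_description _ (Hb j k0))).
  assert (HFc : forall j k0, (k0 <= fst (Fc j k0))%nat /\ is_point X (snd (Fc j k0)) /\
      pdist N (snd (Fc j k0)) x < / (INR j + 1) /\ eps <= pdist N (mv N (g (fst (Fc j k0))) (snd (Fc j k0))) x).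
  { intros j k0. exact (proj2_sig (constructive_indefinite_description _ (Hb j k0))). }
  set (st := fix st j := match j with O => Fc O O | S j' => Fc (S j') (S (fst (st j'))) end).
  set (kk := fun j => fst (st j)). set (yy := fun j => snd (st j)).
  assert (Hst : forall j, is_point X (yy j) /\ pdist N (yy j) x < / (INR j + 1) /\ eps <= pdist N (mv N (g (kk j)) (yy j)) x).
  { intros [|j]; unfold yy, kk; simpl; apply HFc. }
  assert (Hkk : strict_incr kk).
  { intros j. unfold kk. simpl. apply HFc. }
  set (xs := fun k => match excluded_middle_informative (exists j, kk j = k) with
                      | left H => yy (proj1_sig (constructive_indefinite_description _ H))
                      | right _ => x end).
  assert (Hxs : forall j, xs (kk j) = yy j).
  { intros j. unfold xs. destruct (excluded_middle_informative (exists j0, kk j0 = kk j)) as [H|H].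
    - destruct (constructive_indefinite_description _ H) as [j' Hj']. simpl.
      assert (j' = j). { destruct (Nat.lt_total j' j) as [Hl|[Hl|Hl]]; auto.
        pose proof (strict_incr_lt kk Hkk _ _ Hl); lia. pose proof (strict_incr_lt kk Hkk _ _ Hl); lia. }
      subst; reflexivity.
    - exfalso; apply H; exists j; auto. }
  assert (Hxs2 : forall k, (forall j, kk j <> k) -> xs k = x).
  { intros k Hk. unfold xs. destruct (excluded_middle_informative (exists j, kk j = k)) as [[j Hj]|H]; auto.
    exfalso; apply (Hk j Hj). }
  assert (Hpts : forall k, is_point X (xs k)).
  { intros k. destruct (classic (exists j, kk j = k)) as [[j Hj]|Hn2].
    - subst. rewrite Hxs. apply Hst.
    - rewrite Hxs2; auto. intros j Hj; apply Hn2; exists j; auto. }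
  assert (Hcv : pconv X xs x).
  { intros e He'. destruct (inv_INR_small e He') as [J HJ]. exists (S (kk J)). intros k Hk.
    unfold Rdist. rewrite Rminus_0_r, Rabs_pos_eq by apply pdist_pos.
    destruct (classic (exists j, kk j = k)) as [[j Hj]|Hn2].
    - subst. rewrite Hxs. assert (J < j)%nat.
      { destruct (Nat.lt_ge_cases J j); auto. pose proof (strict_incr_mono kk Hkk _ _ H). lia. }
      eapply Rlt_trans. apply Hst. apply HJ. lia.
    - rewrite Hxs2. rewrite pdist_refl. auto. apply Hx. intros j Hj; apply Hn2; exists j; auto. }
  destruct (H1 xs Hpts Hcv eps He) as [k0 Hk0].
  specialize (Hk0 (kk k0) (strict_incr_ge kk Hkk k0)). unfold Rdist in Hk0.
  rewrite Rminus_0_r, Rabs_pos_eq in Hk0 by apply pdist_pos. rewrite Hxs in Hk0.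
  pose proof (proj2 (proj2 (Hst k0))). change (pdist N (mv N (g (kk k0)) (yy k0)) x < eps) in Hk0. lra.
Qed.

Lemma Hu_cv : cv0 (fun k => pdist N (u k) x).
Proof. assert (H := H1 (fun _ => x) (fun _ => Hxp)).
  assert (Hc : pconv X (fun _ => x) x).
  { intros e He. exists 0%nat. intros. unfold Rdist. change (Rabs (pdist N x x - 0) < e). rewrite pdist_refl by apply Hx. rewrite Rminus_0_r, Rabs_R0. auto. }
  specialize (H Hc). apply (proj2 (cv0_Un_cv _)). intros e He. destruct (H e He) as [k0 Hk]. exists k0. intros k Hk'.
  unfold uu, Bk. rewrite pdist_scal. apply Hk; auto. apply Rinv_neq_0_compat. pose proof (cc_pos N g x Hinv Hx k). lra. Qed.

Lemma dn0 v : is_tangent X x v -> cv0 (fun k => vnorm N (F k v)).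
Proof. intros Hv. specialize (H2 v Hv). intros e He.
  destruct (H2 (1/2)) as [k0 Hk0]. lra.
  destruct (HTi (- 2 * ln e)) as [k1 Hk1].
  exists (max k0 k1). intros k Hk. specialize (Hk0 k ltac:(lia)). specialize (Hk1 k ltac:(lia)).
  rewrite <- (dnorm_Fk N g x Hinv Hx k v). rewrite Rabs_pos_eq.
  2:{ unfold dnorm. apply Rmult_le_pos. apply vnorm_pos. left; apply Rinv_0_lt_compat. apply vnorm_nonzero. apply inv_nonzero; auto. exact (proj1 Hxp). }
  unfold Rdist in Hk0. apply Rabs_def2 in Hk0. destruct Hk0 as [Hk0 _].
  specialize (HT k).
  assert (ln (dnorm N (g k) x v) < - T k / 2).
  { apply Rmult_lt_reg_l with (/ T k). apply Rinv_0_lt_compat; auto.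
    replace (/ T k * (- T k / 2)) with (-1/2) by (field; lra). lra. }
  assert (Hle : ln (dnorm N (g k) x v) < ln e) by lra.
  destruct (Rle_lt_dec (dnorm N (g k) x v) 0) as [Hd|Hd].
  - lra.
  - apply ln_lt_inv; auto. Qed.

Lemma stepM v : is_tangent X x v -> (forall s, is_point X (vsub x (vscal s v))) ->
  EB (fun k => dot N (u k) (B k v)).
Proof. intros Hv Hpv. apply NNPP. intros Hn.
  destruct (unif1 (1/2)) as [del [k0 [Hdel Hu1]]]. lra.
  destruct (Hu_cv (1/2)) as [k1 Hk1]. lra.
  assert (Hnx : 0 < vnorm N x) by (apply vnorm_nonzero; exact (proj1 Hxp)).
  set (C := vnorm N v / (del * vnorm N x) + 1).
  assert (HC : 0 < C). { unfold C. pose proof (vnorm_pos N v). assert (0 <= vnorm N v / (del * vnorm N x)). apply Rmult_le_pos; auto. left; apply Rinv_0_lt_compat; nra. lra. }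
  assert (Hk : exists k, (max k0 k1 <= k)%nat /\ C < Rabs (dot N (u k) (B k v))).
  { apply NNPP. intros Hk. apply Hn. exists C, (max k0 k1). intros k Hk'. apply Rnot_lt_le. intros Hlt. apply Hk. exists k; auto. }
  destruct Hk as [k [Hk Hmu]].
  set (mu := dot N (u k) (B k v)) in *.
  assert (Hmu0 : mu <> 0) by (intros E; rewrite E, Rabs_R0 in Hmu; lra).
  set (y := vsub x (vscal (/ mu) v)).
  assert (Hy : is_point X y) by apply Hpv.
  assert (Hxv : dot N x v = 0) by (destruct Hv as [_ [E _]]; exact E).
  assert (Hyy : dot N x x <= dot N y y).
  { unfold y. rewrite dot_sub_l, !dot_sub_r, !dot_scal_l, !dot_scal_r. rewrite (dot_sym N v x), Hxv.
    pose proof (dot_pos N v). assert (0 <= / mu * (/ mu * dot N v v)) by (rewrite <- Rmult_assoc; apply Rmult_le_pos; [nra| auto]). lra. }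
  assert (Hyd : pdist N y x < del).
  { pose proof (pdist_L1 N y x 1 ltac:(pose proof Hx; lra) Hx) as HL.
    rewrite (vnorm_ext N (vsub y (vscal 1 x)) (vscal (- / mu) v)) in HL by (intros; unfold y, vsub, vscal; ring).
    rewrite vnorm_scal, Rabs_Ropp, Rabs_inv in HL.
    assert (Hny : vnorm N x <= vnorm N y) by (unfold vnorm; apply sqrt_le_1_alt; auto).
    assert (Hpa : 0 < Rabs mu) by lra.
    assert (pdist N y x * vnorm N x <= vnorm N v / Rabs mu).
    { eapply Rle_trans; [|unfold Rdiv; rewrite Rmult_comm; exact HL]. apply Rmult_le_compat_l; auto. apply pdist_pos. }
    assert (vnorm N v / Rabs mu < del * vnorm N x).
    { apply Rmult_lt_reg_r with (Rabs mu); auto. unfold Rdiv. rewrite Rmult_assoc, Rinv_l by lra. rewrite Rmult_1_r.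
      assert (vnorm N v < C * (del * vnorm N x)).
      { unfold C. rewrite Rmult_plus_distr_r. unfold Rdiv. rewrite Rmult_assoc, Rinv_l by nra. assert (0 < del * vnorm N x) by nra. lra. }
      assert (0 < del * vnorm N x) by nra. nra. }
    apply Rmult_lt_reg_r with (vnorm N x); auto. lra. }
  assert (Hgy := Hu1 k y ltac:(lia) Hy Hyd).
  assert (E : mv N (g k) y = vscal (- cc N g x k / mu) (F k v)).
  { unfold y. rewrite mv_sub, mv_scal. unfold Fk. change (dot N (u k) (B k v)) with mu.
    extensionality i. unfold uu, Bk, vsub, vscal.
    pose proof (cc_pos N g x Hinv Hx k). field. split; lra. }
  rewrite E, pdist_scal in Hgy.
  2:{ pose proof (cc_pos N g x Hinv Hx k). intros Z. apply Hmu0. unfold Rdiv in Z. apply Rmult_integral in Z. destruct Z as [Z|Z]. lra. apply Rinv_neq_0_compat in Hmu0. contradiction. }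
  assert (HFv : 0 < dot N (F k v) (F k v)).
  { apply nonzero_dot. assert (Hn2 := inv_nonzero N (g k) y (Hinv k) (proj1 Hy)). rewrite E in Hn2.
    destruct Hn2 as [i [Hi Hne]]. exists i. split; auto. intros Z. apply Hne. unfold vscal. rewrite Z. ring. }
  assert (Hperp : dot N (F k v) (u k) = 0).
  { unfold Fk. rewrite dot_sub_l, dot_scal_l. rewrite uu_unit; auto. rewrite dot_sym. fold mu. ring. apply Hx. }
  pose proof (pdist_L3 N (F k v) (u k) x HFv ltac:(rewrite uu_unit; [lra|auto|apply Hx]) Hx Hperp).
  specialize (Hk1 k ltac:(lia)). rewrite Rabs_pos_eq in Hk1 by apply pdist_pos.
  pose proof (pdist_pos N (u k) x). pose proof (pdist_pos N (F k v) x).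
  assert (pdist N (u k) x * pdist N (u k) x < 1/4) by nra.
  assert (pdist N (F k v) x * pdist N (F k v) x < 1/4) by nra.
  lra. Qed.

End Common.

Section FrameMore.
Variable N : nat.
Variable g : nat -> Mat.
Variable x : Vec.
Hypothesis Hinv : forall k, invertible N (g k).
Hypothesis Hx : 0 < dot N x x.

Lemma Fk_shift k y t : Fk N g x k (vadd y (vscal t x)) = Fk N g x k y.
Proof. unfold Fk. rewrite Bk_add, Bk_scal. fold (uu N g x k). rewrite dot_add_r, dot_scal_r, uu_unit; auto.
  extensionality i. unfold vsub, vadd, vscal. ring. Qed.

Lemma Fk_add k y z : Fk N g x k (vadd y z) = vadd (Fk N g x k y) (Fk N g x k z).
Proof. unfold Fk. rewrite Bk_add, dot_add_r. extensionality i. unfold vsub, vadd, vscal. ring. Qed.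

Lemma Fk_scal k c y : Fk N g x k (vscal c y) = vscal c (Fk N g x k y).
Proof. unfold Fk. rewrite Bk_scal, dot_scal_r. extensionality i. unfold vsub, vscal. ring. Qed.

Lemma Fk_ext k y z : (forall i, (i < N)%nat -> y i = z i) -> Fk N g x k y = Fk N g x k z.
Proof. intros H. unfold Fk. rewrite (Bk_ext N g x k y z H). reflexivity. Qed.

Lemma Bk_zero k y : (forall i, (i < N)%nat -> y i = 0) -> forall i, Bk N g x k y i = 0.
Proof. intros H i. unfold Bk, vscal. rewrite mv_zero; auto. ring. Qed.

Lemma Fk_zero k y : (forall i, (i < N)%nat -> y i = 0) -> vnorm N (Fk N g x k y) = 0.
Proof. intros H. unfold vnorm. replace (dot N (Fk N g x k y) (Fk N g x k y)) with 0. apply sqrt_0.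
  unfold dot. symmetry. apply sumN_zero. intros i Hi. unfold Fk, vsub, vscal. rewrite !Bk_zero; auto.
  unfold dot. rewrite sumN_zero. ring. intros. rewrite Bk_zero; auto. ring. Qed.

Lemma Bk_bound k y : vnorm N (Bk N g x k y) <= Rabs (dot N (uu N g x k) (Bk N g x k y)) + vnorm N (Fk N g x k y).
Proof. rewrite (vnorm_ext N (Bk N g x k y) (vadd (vscal (dot N (uu N g x k) (Bk N g x k y)) (uu N g x k)) (Fk N g x k y))).
  eapply Rle_trans. apply vnorm_triang. rewrite vnorm_scal, vnorm_uu; auto. lra.
  intros. unfold Fk, vadd, vsub, vscal. ring. Qed.

Lemma dot_x_uB k t : dot N (uu N g x k) (Bk N g x k (vscal t x)) = t.
Proof. rewrite Bk_scal, dot_scal_r. fold (uu N g x k). rewrite uu_unit; auto. ring. Qed.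

End FrameMore.

Definition pj (N : nat) (x : Vec) (j : nat) : Vec := vsub (ev j) (vscal (x j / dot N x x) x).

Lemma pj_perp N x j : 0 < dot N x x -> (j < N)%nat -> dot N x (pj N x j) = 0.
Proof. intros Hx Hj. unfold pj. rewrite dot_sub_r, dot_scal_r, dot_sym, dot_ev by auto. field. lra. Qed.

Lemma ev_pj N x j : (forall i, ev j i = vadd (pj N x j) (vscal (x j / dot N x x) x) i).
Proof. intros i. unfold pj, vadd, vsub, vscal. ring. Qed.

Theorem RPn_case (n : nat) (g : nat -> Mat) (T : nat -> R) (x : Vec) :
  (forall k, in_group (RPn n) (g k)) ->
  (forall k, 0 < T k) -> cv_infty T ->
  is_point (RPn n) x ->
  (forall xs : nat -> Vec, (forall k, is_point (RPn n) (xs k)) -> pconv (RPn n) xs x ->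
     pconv (RPn n) (fun k => mv (mdim (RPn n)) (g k) (xs k)) x) ->
  (forall v, is_tangent (RPn n) x v ->
     Un_cv (fun k => / T k * ln (dnorm (mdim (RPn n)) (g k) x v)) (-1)) ->
  exists (phi : nat -> nat) (a : Vec),
    strict_incr phi /\ chart_center (RPn n) a /\ in_chart (RPn n) a x /\
    forall K : Vec -> Prop, compactX (RPn n) K -> (exists y, K y) ->
      (forall y, K y -> in_chart (RPn n) a y) ->
      hconv_point (RPn n) (fun k z => exists y, K y /\ z = mv (mdim (RPn n)) (g (phi k)) y) x.
Proof.
  intros Hg HT HTi Hxp H1 H2.
  set (X := RPn n). set (N := mdim X).
  assert (Hinv : forall k, invertible N (g k)) by (intros k; exact (proj1 (Hg k))).
  assert (Hx : 0 < dot N x x) by (apply nonzero_dot; exact (proj1 Hxp)).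
  assert (HF : forall j, (j < N)%nat -> cv0 (fun k => vnorm N (Fk N g x k (ev j)))).
  { intros j Hj.
    assert (E : forall k, Fk N g x k (ev j) = Fk N g x k (pj N x j)).
    { intros k. rewrite (Fk_ext N g x k (ev j) (vadd (pj N x j) (vscal (x j / dot N x x) x))) by (intros; apply ev_pj).
      apply Fk_shift; auto. }
    destruct (classic (Defs.nonzero N (pj N x j))) as [Hnz|Hz].
    - apply (cv0_le _ (fun k => vnorm N (Fk N g x k (pj N x j)))).
      apply (dn0 X g T x Hinv Hxp HT HTi H2). split; auto. split; [apply pj_perp; auto| exact I].
      exists 0%nat. intros k _. rewrite E. lra.
    - intros e He. exists 0%nat. intros k _. rewrite E, Fk_zero. rewrite Rabs_R0; auto.
      intros i Hi. destruct (Req_dec (pj N x j i) 0); auto. exfalso; apply Hz; exists i; auto. }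
  assert (HB : forall j, (j < N)%nat -> EB (fun k => vnorm N (Bk N g x k (ev j)))).
  { intros j Hj.
    assert (E : forall k, Bk N g x k (ev j) = vadd (Bk N g x k (pj N x j)) (Bk N g x k (vscal (x j / dot N x x) x))).
    { intros k. rewrite <- Bk_add. apply Bk_ext. intros; apply ev_pj. }
    apply (EB_le _ (fun k => Rabs (dot N (uu N g x k) (Bk N g x k (pj N x j))) + Rabs (x j / dot N x x) + vnorm N (Fk N g x k (ev j)))).
    - apply EB_plus. apply EB_plus. apply EB_abs.
      + destruct (classic (Defs.nonzero N (pj N x j))) as [Hnz|Hz].
        * apply (stepM X g x Hinv Hxp H1). split; auto. split; [apply pj_perp; auto| exact I].
          intros s. split; [|exact I]. apply (dot_nonzero N _ x). rewrite dot_sub_l, dot_scal_l, (dot_sym N (pj N x j)), pj_perp; auto.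
          rewrite Rmult_0_r, Rminus_0_r. lra.
        * exists 0, 0%nat. intros k _. unfold dot. rewrite sumN_zero. rewrite Rabs_R0; lra.
          intros i Hi. rewrite Bk_zero. ring. intros l Hl. destruct (Req_dec (pj N x j l) 0); auto. exfalso; apply Hz; exists l; auto.
      + apply EB_const.
      + apply cv0_EB; auto.
    - exists 0%nat. intros k _. rewrite (Rabs_pos_eq (vnorm _ _)) by apply vnorm_pos.
      pose proof (Rabs_pos (x j / dot N x x)). pose proof (Rabs_pos (dot N (uu N g x k) (Bk N g x k (pj N x j)))).
      pose proof (vnorm_pos N (Fk N g x k (ev j))).
      rewrite Rabs_pos_eq by lra.
      eapply Rle_trans. apply Bk_bound; auto.
      rewrite E at 1. rewrite dot_add_r, dot_x_uB; auto.
      pose proof (Rabs_triang (dot N (uu N g x k) (Bk N g x k (pj N x j))) (x j / dot N x x)). lra. }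
  destruct (final_core X g x Hinv Hx (Hu_cv X g x Hinv Hxp H1) HF HB) as [phi [a [Hphi [_ [Hax Hfin]]]]].
  exists phi, a. split; auto. split.
  - apply (dot_nonzero N a x). intro Z; change (dot (mdim X) a x = 0) in Z; lra.
  - split. split; auto. simpl. intro Z; change (dot (mdim X) a x = 0) in Z; lra.
    intros K HK Hne Hch. apply Hfin; auto. intros y Ky. exact (proj2 (Hch y Ky)).
Qed.

Definition Jv (p : nat) (v : Vec) : Vec := fun i => if Nat.ltb i (p + 1) then v i else - v i.

Lemma JJ p v : Jv p (Jv p v) = v.
Proof. extensionality i. unfold Jv. destruct (Nat.ltb i (p+1)); ring. Qed.
Lemma J_add p u v : Jv p (vadd u v) = vadd (Jv p u) (Jv p v).
Proof. extensionality i. unfold Jv, vadd. destruct (Nat.ltb i (p+1)); ring. Qed.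
Lemma J_sub p u v : Jv p (vsub u v) = vsub (Jv p u) (Jv p v).
Proof. extensionality i. unfold Jv, vsub. destruct (Nat.ltb i (p+1)); ring. Qed.
Lemma J_scal p c v : Jv p (vscal c v) = vscal c (Jv p v).
Proof. extensionality i. unfold Jv, vscal. destruct (Nat.ltb i (p+1)); ring. Qed.

Section J.
Variable N p : nat.
Lemma dot_J u v : dot N (Jv p u) v = dot N u (Jv p v).
Proof. unfold dot, Jv. apply sumN_ext. intros. destruct (Nat.ltb i (p+1)); ring. Qed.
Lemma dot_JJ u v : dot N (Jv p u) (Jv p v) = dot N u v.
Proof. rewrite dot_J, JJ. reflexivity. Qed.
Lemma vnorm_J u : vnorm N (Jv p u) = vnorm N u.
Proof. unfold vnorm. rewrite dot_JJ. reflexivity. Qed.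
Lemma J_ext u v : (forall i, (i < N)%nat -> u i = v i) -> forall i, (i < N)%nat -> Jv p u i = Jv p v i.
Proof. intros H i Hi. unfold Jv. rewrite H; auto. Qed.
End J.

Lemma qform_J p q u v : qform p q u v = dot (p + q + 2) (Jv p u) v.
Proof. unfold qform, dot. replace (p + q + 2)%nat with (p + 1 + (q + 1))%nat by lia.
  rewrite (sumN_add (p+1) (q+1)). 
  rewrite (sumN_ext (p+1) (fun i => Jv p u i * v i) (fun i => u i * v i)).
  rewrite (sumN_ext (q+1) (fun i => Jv p u (p + 1 + i)%nat * v (p + 1 + i)%nat) (fun i => -1 * (u (p + 1 + i)%nat * v (p + 1 + i)%nat))).
  rewrite sumN_scal. ring.
  - intros i Hi. unfold Jv. assert (Nat.ltb (p + 1 + i) (p+1) = false) by (apply Nat.ltb_ge; lia). rewrite H. ring.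
  - intros i Hi. unfold Jv. assert (Nat.ltb i (p+1) = true) by (apply Nat.ltb_lt; lia). rewrite H. ring. Qed.

Lemma mvT_adj' N A z y : dot N (mvT N A z) y = dot N z (mv N A y).
Proof. rewrite dot_sym, <- mvT_adj, dot_sym. reflexivity. Qed.

Lemma mvT_ext N A z z' : (forall i, (i < N)%nat -> z i = z' i) -> mvT N A z = mvT N A z'.
Proof. intros H. extensionality j. unfold mvT. apply sumN_ext. intros. rewrite H; auto. Qed.

Section Inv.
Variable p q : nat.
Let N := (p + q + 2)%nat.
Variable A : Mat.
Hypothesis HA : invertible N A.
Hypothesis Hq : forall u v, qform p q (mv N A u) (mv N A v) = qform p q u v.

Lemma inv_formula c : forall i, (i < N)%nat -> mv N A (Jv p (mvT N A (Jv p c))) i = c i.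
Proof. set (d := Jv p (mvT N A (Jv p c))).
  assert (Hv : forall v, dot N (Jv p (vsub (mv N A d) c)) (mv N A v) = 0).
  { intros v. rewrite J_sub, dot_sub_l. pose proof (Hq d v) as E. rewrite !qform_J in E. fold N in E. rewrite E.
    unfold d. rewrite JJ. rewrite mvT_adj'. ring. }
  destruct (inv_mv N A HA) as [Bi [HAB _]].
  set (w := vsub (mv N A d) c).
  specialize (Hv (mv N Bi (Jv p w))). fold w in Hv.
  rewrite (dot_ext N _ (Jv p w) _ (Jv p w)) in Hv by (auto; intros; apply HAB; auto).
  rewrite dot_JJ in Hv. intros i Hi. pose proof (dot_zero_coord N w Hv i Hi). unfold w, vsub in H. lra. Qed.

Lemma inv_formula2 z : forall i, (i < N)%nat -> mv N A (Jv p (mvT N A z)) i = Jv p z i.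
Proof. intros i Hi. rewrite <- (inv_formula (Jv p z) i Hi). rewrite JJ. reflexivity. Qed.
End Inv.

Lemma perp2 N x i1 i2 : i1 <> i2 -> (i1 < N)%nat -> (i2 < N)%nat ->
  exists f, (forall i, i <> i1 -> i <> i2 -> f i = 0) /\ Defs.nonzero N f /\ dot N x f = 0.
Proof. intros Hne H1 H2.
  destruct (classic (x i1 = 0 /\ x i2 = 0)) as [[Z1 Z2]|Hz].
  - exists (ev i1). split; [|split].
    + intros i Hi _. unfold ev. apply Nat.eqb_neq in Hi. rewrite Hi. reflexivity.
    + exists i1. split; auto. unfold ev. rewrite Nat.eqb_refl. lra.
    + rewrite dot_sym, dot_ev; auto.
  - exists (vsub (vscal (x i2) (ev i1)) (vscal (x i1) (ev i2))). split; [|split].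
    + intros i Ha Hb. unfold vsub, vscal, ev. apply Nat.eqb_neq in Ha. apply Nat.eqb_neq in Hb. rewrite Ha, Hb. ring.
    + destruct (Req_dec (x i2) 0) as [E|E].
      * exists i2. split; auto. unfold vsub, vscal, ev. rewrite Nat.eqb_refl.
        assert (Nat.eqb i2 i1 = false) by (apply Nat.eqb_neq; auto). rewrite H. assert (x i1 <> 0) by tauto. lra.
      * exists i1. split; auto. unfold vsub, vscal, ev. rewrite Nat.eqb_refl.
        assert (Nat.eqb i1 i2 = false) by (apply Nat.eqb_neq; auto). rewrite H. lra.
    + rewrite dot_sub_r, !dot_scal_r, !(dot_sym N x), !dot_ev; auto. ring. Qed.

Section Ein.
Variable p q : nat.
Let X := Ein p q.
Let N := mdim X.
Variable g : nat -> Mat.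
Variable T : nat -> R.
Variable x : Vec.
Hypothesis Hp : (1 <= p)%nat.
Hypothesis Hqq : (1 <= q)%nat.
Hypothesis Hg : forall k, in_group X (g k).
Hypothesis Hxp : is_point X x.
Hypothesis HT : forall k, 0 < T k.
Hypothesis HTi : cv_infty T.
Hypothesis H1 : forall xs : nat -> Vec, (forall k, is_point X (xs k)) -> pconv X xs x ->
     pconv X (fun k => mv N (g k) (xs k)) x.
Hypothesis H2 : forall v, is_tangent X x v ->
     Un_cv (fun k => / T k * ln (dnorm N (g k) x v)) (-1).

Notation J := (Jv p).
Notation B := (Bk N g x).
Notation u := (uu N g x).
Notation F := (Fk N g x).
Notation cc := (cc N g x).

Lemma HN : N = (p + q + 2)%nat.
Proof. reflexivity. Qed.

Lemma qJ u v : qform p q u v = dot N (J u) v.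
Proof. apply qform_J. Qed.

Lemma Hinv' : forall k, invertible N (g k).
Proof. intros k. exact (proj1 (Hg k)). Qed.

Lemma Hx' : 0 < dot N x x.
Proof. apply nonzero_dot. exact (proj1 Hxp). Qed.

Lemma Hiso k u0 v : dot N (J (mv N (g k) u0)) (mv N (g k) v) = dot N (J u0) v.
Proof. rewrite <- !qJ. exact (proj2 (Hg k) u0 v). Qed.

Lemma x_iso : dot N (J x) x = 0.
Proof. rewrite <- qJ. exact (proj2 Hxp). Qed.

Definition inT v := dot N x v = 0 /\ dot N (J x) v = 0.

Lemma inT_tangent v : inT v -> Defs.nonzero N v -> is_tangent X x v.
Proof. intros [H3 H4] Hn. split; auto. split; auto. simpl. rewrite qJ. auto. Qed.

Lemma inT_pert i : inT i -> dot N (J i) i = 0 -> forall s, is_point X (vsub x (vscal s i)).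
Proof. intros [H3 H4] Hi s. split.
  - apply (dot_nonzero N _ x). rewrite dot_sub_l, dot_scal_l, (dot_sym N i), H3. pose proof Hx'. lra.
  - simpl. rewrite qJ. rewrite J_sub, J_scal, dot_sub_l, !dot_sub_r, !dot_scal_l, !dot_scal_r.
    rewrite H4, x_iso, Hi. rewrite (dot_J N p i x). rewrite <- (dot_sym N (J x)), H4. ring. Qed.

Lemma inT_J v : inT v -> inT (J v).
Proof. intros [H3 H4]. split.
  - rewrite dot_sym. rewrite dot_J, dot_sym. auto.
  - rewrite dot_JJ. auto. Qed.

Lemma inT_add v w : inT v -> inT w -> inT (vadd v w).
Proof. intros [A1 A2] [B1 B2]. split; rewrite dot_add_r; lra. Qed.
Lemma inT_scal c v : inT v -> inT (vscal c v).
Proof. intros [A1 A2]. split; rewrite dot_scal_r; nra. Qed.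

Lemma fp_ex : exists f, inT f /\ Defs.nonzero N f /\ J f = f.
Proof. destruct (perp2 N x 0 1) as [f [Hs [Hn Hd]]]; try (unfold N; simpl; lia).
  exists f. assert (HJ : J f = f).
  { extensionality i. unfold Jv. destruct (Nat.ltb_spec i (p + 1)); auto. rewrite Hs by lia. ring. }
  split; [|auto]. split; auto. rewrite dot_J. rewrite HJ. auto. Qed.

Lemma fm_ex : exists f, inT f /\ Defs.nonzero N f /\ J f = vscal (-1) f.
Proof. destruct (perp2 N x (p+1) (p+2)) as [f [Hs [Hn Hd]]]; try (unfold N; simpl; lia).
  exists f. assert (HJ : J f = vscal (-1) f).
  { extensionality i. unfold Jv, vscal. destruct (Nat.ltb_spec i (p + 1)). rewrite Hs by lia. ring. ring. }
  split; [|auto]. split; auto. rewrite dot_J. rewrite HJ, dot_scal_r, Hd. ring. Qed.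

Section Span.
Variable fp fm : Vec.
Hypothesis Hfp : inT fp /\ Defs.nonzero N fp /\ J fp = fp.
Hypothesis Hfm : inT fm /\ Defs.nonzero N fm /\ J fm = vscal (-1) fm.

Lemma T_span (phi : nat -> Vec -> R) :
  (forall k a b, phi k (vadd a b) = phi k a + phi k b) -> (forall k c a, phi k (vscal c a) = c * phi k a) ->
  (forall k a b, (forall i, (i < N)%nat -> a i = b i) -> phi k a = phi k b) ->
  (forall i, inT i -> dot N (J i) i = 0 -> Defs.nonzero N i -> EB (fun k => phi k i)) ->
  forall v, inT v -> EB (fun k => phi k v).
Proof. intros Hadd Hsc Hext Hiso v Hv.
  assert (Hiso' : forall i, inT i -> dot N (J i) i = 0 -> EB (fun k => phi k i)).
  { intros i Hi Hii. destruct (classic (Defs.nonzero N i)) as [Hn|Hn]; auto.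
    exists 0, 0%nat. intros k _. rewrite (Hext k i (vscal 0 i)), Hsc. rewrite Rmult_0_l, Rabs_R0; lra.
    intros l Hl. unfold vscal. destruct (Req_dec (i l) 0) as [E|E]. rewrite E; ring. exfalso; apply Hn; exists l; auto. }
  destruct Hfp as [Tp [Np Jp]]. destruct Hfm as [Tm [Nm Jm]].
  assert (Hnp := vnorm_nonzero N fp Np). assert (Hnm := vnorm_nonzero N fm Nm).
  set (vp := vscal (1/2) (vadd v (J v))). set (vm := vscal (1/2) (vsub v (J v))).
  assert (Jvp : J vp = vp). { unfold vp. rewrite J_scal, J_add, JJ. extensionality i. unfold vscal, vadd. ring. }
  assert (Jvm : J vm = vscal (-1) vm). { unfold vm. rewrite J_scal, J_sub, JJ. extensionality i. unfold vscal, vsub. ring. }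
  assert (Tvp : inT vp) by (apply inT_scal, inT_add; auto; apply inT_J; auto).
  assert (Tvm : inT vm). { unfold vm. apply inT_scal.
    replace (vsub v (J v)) with (vadd v (vscal (-1) (J v))) by (extensionality i; unfold vadd, vsub, vscal; ring).
    apply inT_add; auto. apply inT_scal, inT_J; auto. }
  set (lp := vnorm N vp / vnorm N fm). set (lm := vnorm N vm / vnorm N fp).
  set (i1 := vadd vp (vscal lp fm)). set (i2 := vadd vp (vscal (- lp) fm)).
  set (i3 := vadd vm (vscal lm fp)). set (i4 := vadd vm (vscal (- lm) fp)).
  assert (Hdv : forall i, (i < N)%nat -> v i = vadd (vadd (vscal (1/2) i1) (vscal (1/2) i2)) (vadd (vscal (1/2) i3) (vscal (1/2) i4)) i).
  { intros i Hi. unfold i1, i2, i3, i4, vp, vm, vadd, vsub, vscal. field. }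
  assert (Hvp2 : vnorm N vp * vnorm N vp = dot N vp vp) by apply vnorm_sq.
  assert (Hfm2 : vnorm N fm * vnorm N fm = dot N fm fm) by apply vnorm_sq.
  assert (Hvm2 : vnorm N vm * vnorm N vm = dot N vm vm) by apply vnorm_sq.
  assert (Hfp2 : vnorm N fp * vnorm N fp = dot N fp fp) by apply vnorm_sq.
  assert (Iso1 : forall l, l * l * dot N fm fm = dot N vp vp -> dot N (J (vadd vp (vscal l fm))) (vadd vp (vscal l fm)) = 0).
  { intros l Hl. rewrite J_add, J_scal. rewrite Jvp, Jm.
    rewrite dot_add_l, !dot_add_r, !dot_scal_l, !dot_scal_r. rewrite (dot_sym N fm vp). lra. }
  assert (Iso2 : forall l, l * l * dot N fp fp = dot N vm vm -> dot N (J (vadd vm (vscal l fp))) (vadd vm (vscal l fp)) = 0).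
  { intros l Hl. rewrite J_add, J_scal. rewrite Jvm, Jp.
    rewrite dot_add_l, !dot_add_r, !dot_scal_l, !dot_scal_r. rewrite (dot_sym N fp vm). lra. }
  assert (Hlp : lp * lp * dot N fm fm = dot N vp vp) by (unfold lp; rewrite <- Hfm2, <- Hvp2; field; lra).
  assert (Hlm : lm * lm * dot N fp fp = dot N vm vm) by (unfold lm; rewrite <- Hfp2, <- Hvm2; field; lra).
  assert (E1 : EB (fun k => phi k i1)) by (apply Hiso'; [apply inT_add; auto; apply inT_scal; auto| apply Iso1; auto]).
  assert (E2 : EB (fun k => phi k i2)) by (apply Hiso'; [apply inT_add; auto; apply inT_scal; auto| apply Iso1; nra]).
  assert (E3 : EB (fun k => phi k i3)) by (apply Hiso'; [apply inT_add; auto; apply inT_scal; auto| apply Iso2; auto]).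
  assert (E4 : EB (fun k => phi k i4)) by (apply Hiso'; [apply inT_add; auto; apply inT_scal; auto| apply Iso2; nra]).
  apply (EB_le _ (fun k => 1/2 * phi k i1 + 1/2 * phi k i2 + (1/2 * phi k i3 + 1/2 * phi k i4))).
  - apply EB_plus; apply EB_plus; apply EB_mult; auto; apply EB_const.
  - exists 0%nat. intros k _. rewrite (Hext k v _ Hdv). rewrite !Hadd, !Hsc. lra. Qed.
End Span.

Lemma M_iso i : inT i -> dot N (J i) i = 0 -> Defs.nonzero N i -> EB (fun k => dot N (u k) (B k i)).
Proof. intros Ti Ii Ni. apply (stepM X g x Hinv' Hxp H1). apply inT_tangent; auto. apply inT_pert; auto. Qed.

Lemma T_cv0 v : inT v -> cv0 (fun k => vnorm N (F k v)).
Proof. intros Tv. destruct (classic (Defs.nonzero N v)) as [Hn|Hn].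
  - apply (dn0 X g T x Hinv' Hxp HT HTi H2). apply inT_tangent; auto.
  - intros e He. exists 0%nat. intros k _. rewrite Fk_zero, Rabs_R0; auto.
    intros l Hl. destruct (Req_dec (v l) 0); auto. exfalso; apply Hn; exists l; auto. Qed.

Lemma T_mu v : inT v -> EB (fun k => dot N (u k) (B k v)).
Proof. intros Tv. destruct fp_ex as [fp Hfp]. destruct fm_ex as [fm Hfm].
  apply (T_span fp fm Hfp Hfm (fun k v => dot N (u k) (B k v))); auto.
  - intros. rewrite Bk_add, dot_add_r. reflexivity.
  - intros. rewrite Bk_scal, dot_scal_r. reflexivity.
  - intros. rewrite (Bk_ext N g x k a b); auto.
  - intros. apply M_iso; auto. Qed.

Lemma T_B v : inT v -> EB (fun k => vnorm N (B k v)).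
Proof. intros Tv. apply (EB_le _ (fun k => Rabs (dot N (u k) (B k v)) + vnorm N (F k v))).
  - apply EB_plus. apply EB_abs, T_mu; auto. apply cv0_EB, T_cv0; auto.
  - exists 0%nat. intros k _. rewrite (Rabs_pos_eq (vnorm _ _)) by apply vnorm_pos.
    rewrite Rabs_pos_eq. apply Bk_bound. apply Hinv'. apply Hx'.
    pose proof (Rabs_pos (dot N (u k) (B k v))). pose proof (vnorm_pos N (F k v)). lra. Qed.

Lemma dotJ_scal a y : dot N (J (vscal a y)) (vscal a y) = a * a * dot N (J y) y.
Proof. rewrite J_scal, dot_scal_l, dot_scal_r. ring. Qed.

Lemma u_iso k : dot N (J (u k)) (u k) = 0.
Proof. unfold uu, Bk. rewrite dotJ_scal, Hiso, x_iso. ring. Qed.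

Lemma cc_inf : cv0 (fun k => / (cc k * cc k)).
Proof. destruct fp_ex as [fp [Tfp [Nfp Jfp]]].
  assert (Hf := nonzero_dot N fp Nfp).
  assert (Hmu := T_mu fp Tfp). assert (Hr := T_cv0 fp Tfp).
  apply (cv0_le _ (fun k => / dot N fp fp * (vnorm N (F k fp) * (2 * Rabs (dot N (u k) (B k fp)) + vnorm N (F k fp))))).
  - apply cv0_const_mult. apply cv0_mult_EB; auto. apply EB_plus. apply EB_mult. apply EB_const. apply EB_abs; auto. apply cv0_EB; auto.
  - exists 0%nat. intros k _. pose proof (cc_pos N g x Hinv' Hx' k) as Hc.
    set (mu := dot N (u k) (B k fp)). set (f := F k fp).
    assert (Id : dot N fp fp * / (cc k * cc k) = 2 * mu * dot N (J (u k)) f + dot N (J f) f).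
    { assert (E1 : dot N (J (B k fp)) (B k fp) = dot N fp fp * / (cc k * cc k)).
      { unfold Bk. rewrite dotJ_scal, Hiso, Jfp. field. lra. }
      rewrite <- E1. rewrite (dot_ext N (J (B k fp)) (J (vadd (vscal mu (u k)) f)) (B k fp) (vadd (vscal mu (u k)) f)).
      rewrite J_add, J_scal, dot_add_l, !dot_add_r, !dot_scal_l, !dot_scal_r, u_iso.
      rewrite (dot_J N p f (u k)), (dot_sym N f). ring.
      intros i Hi. unfold f, Fk, vadd, vsub, vscal, Jv. fold mu. destruct (Nat.ltb i (p+1)); ring.
      intros i Hi. unfold f, Fk, vadd, vsub, vscal. fold mu. ring. }
    assert (Hinvc : / (cc k * cc k) = / dot N fp fp * (2 * mu * dot N (J (u k)) f + dot N (J f) f)).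
    { rewrite <- Id. field. lra. }
    rewrite Hinvc. rewrite Rabs_mult. rewrite (Rabs_pos_eq (/ dot N fp fp)) by (left; apply Rinv_0_lt_compat; auto).
    rewrite (Rabs_pos_eq (/ dot N fp fp * _)).
    2:{ apply Rmult_le_pos. left; apply Rinv_0_lt_compat; auto. apply Rmult_le_pos. apply vnorm_pos. pose proof (Rabs_pos mu). pose proof (vnorm_pos N f). lra. }
    apply Rmult_le_compat_l. left; apply Rinv_0_lt_compat; auto.
    assert (A1 : Rabs (dot N (J (u k)) f) <= vnorm N f) by (eapply Rle_trans; [apply dot_abs_le| rewrite vnorm_J, vnorm_uu; [lra|apply Hinv'|apply Hx']]).
    assert (A2 : Rabs (dot N (J f) f) <= vnorm N f * vnorm N f) by (eapply Rle_trans; [apply dot_abs_le| rewrite vnorm_J; lra]).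
    eapply Rle_trans. apply Rabs_triang. rewrite !Rabs_mult. rewrite (Rabs_pos_eq 2) by lra.
    pose proof (Rabs_pos mu). pose proof (vnorm_pos N f). pose proof (Rabs_pos (dot N (J (u k)) f)). nra. Qed.

Lemma Hq_g k : forall u0 v, qform p q (mv (p + q + 2) (g k) u0) (mv (p + q + 2) (g k) v) = qform p q u0 v.
Proof. exact (proj2 (Hg k)). Qed.

Lemma Fk_perp k y : dot N (F k y) (u k) = 0.
Proof. unfold Fk. rewrite dot_sub_l, dot_scal_l, uu_unit, dot_sym. ring. apply Hinv'. apply Hx'. Qed.

Lemma Bk_x k : B k x = u k.
Proof. reflexivity. Qed.

Lemma xT_B e : dot N (J x) e = 0 -> EB (fun k => vnorm N (B k e)).
Proof. intros He. set (al := dot N e x / dot N x x). set (v := vsub e (vscal al x)).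
  assert (Hx := Hx').
  assert (Tv : inT v).
  { split; unfold v; rewrite dot_sub_r, dot_scal_r.
    - unfold al. rewrite dot_sym. field. lra.
    - rewrite He, x_iso. ring. }
  apply (EB_le _ (fun k => vnorm N (B k v) + Rabs al)).
  - apply EB_plus. apply T_B; auto. apply EB_const.
  - exists 0%nat. intros k _. rewrite (Rabs_pos_eq (vnorm _ _)) by apply vnorm_pos.
    rewrite Rabs_pos_eq by (pose proof (vnorm_pos N (B k v)); pose proof (Rabs_pos al); lra).
    rewrite (Bk_ext N g x k e (vadd v (vscal al x))) by (intros; unfold v, vadd, vsub, vscal; ring).
    rewrite Bk_add, Bk_scal. eapply Rle_trans. apply vnorm_triang. rewrite vnorm_scal.
    change (Bk N g x k x) with (u k). rewrite vnorm_uu. lra. apply Hinv'. auto. Qed.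

Lemma pdist_perp c : 0 < dot N c c -> dot N c x = 0 -> 0 < pdist N c x.
Proof. intros Hc Hcx. assert (E := pdist_sq N c x Hc Hx'). rewrite Hcx in E.
  replace (1 - 0 ^ 2 / (dot N c c * dot N x x)) with 1 in E by (field; pose proof Hx'; nra).
  pose proof (pdist_pos N c x). destruct H; auto. rewrite <- H in E. lra. Qed.

Lemma inv_trick c : is_point X c -> 0 < pdist N c x -> EB (fun k => dot N (J c) (B k (J x))).
Proof. intros Hc Hpc.
  destruct (unif1 X g x Hxp H1 (pdist N c x) Hpc) as [del [k0 [Hdel Hu1]]].
  assert (Hx := Hx').
  assert (Hcc : 0 < dot N c c) by (apply nonzero_dot; exact (proj1 Hc)).
  set (S := fun k => sumN N (fun j => vnorm N (B k (J (pj N x j))))).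
  assert (HS : EB S).
  { apply EB_sumN. intros j Hj. apply xT_B. rewrite dot_JJ. apply pj_perp; auto. }
  apply (EB_le _ (fun k => vnorm N c * S k * / del * vnorm N x)).
  - apply EB_mult; [|apply EB_const]. apply EB_mult; [|apply EB_const]. apply EB_mult; auto. apply EB_const.
  - exists k0. intros k Hk.
    set (A := g k).
    set (y := J (mvT N A (J c))).
    assert (HAy : forall i, (i < N)%nat -> mv N A y i = c i).
    { intros i Hi. apply (inv_formula p q A (Hinv' k) (Hq_g k) c i Hi). }
    assert (Hyp : is_point X y).
    { split.
      - destruct (classic (Defs.nonzero N y)) as [|Hn]; auto. exfalso.
        destruct (proj1 Hc) as [i [Hi Hci]]. apply Hci. rewrite <- (HAy i Hi). apply mv_zero.
        intros l Hl. destruct (Req_dec (y l) 0); auto. exfalso; apply Hn; exists l; auto.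
      - simpl. rewrite <- (Hq_g k y y). rewrite !qform_J. fold N. rewrite (dot_ext N _ (Jv p c) _ c).
        rewrite <- qJ. exact (proj2 Hc). apply J_ext; auto. auto. }
    assert (Hyd : del <= pdist N y x).
    { apply Rnot_lt_le. intros Hlt. specialize (Hu1 k y Hk Hyp Hlt). rewrite (pdist_ext N _ c x x) in Hu1; auto. lra. }
    set (y' := J (vscal (/ cc k) (mvT N A (J c)))).
    pose proof (cc_pos N g x Hinv' Hx k) as Hck.
    assert (Ey' : y' = vscal (/ cc k) y) by (unfold y', y; rewrite J_scal; reflexivity).
    assert (Hyd' : del <= pdist N y' x) by (rewrite Ey', pdist_scal; auto; apply Rinv_neq_0_compat; lra).
    assert (Hyy : 0 < dot N y' y').
    { rewrite Ey', dot_scal_l, dot_scal_r. pose proof (nonzero_dot N y (proj1 Hyp)).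
      assert (0 < / cc k) by (apply Rinv_0_lt_compat; lra). repeat apply Rmult_lt_0_compat; auto. }
    assert (Hdy : forall e, dot N y' e = dot N (J c) (B k (J e))).
    { intros e. unfold y'. rewrite dot_J, dot_scal_l, mvT_adj'. unfold Bk. rewrite dot_scal_r. reflexivity. }
    set (t := dot N y' x / dot N x x).
    assert (Hsub : vnorm N (vsub y' (vscal t x)) <= vnorm N c * S k).
    { eapply Rle_trans. apply vnorm_le_sumabs. unfold S. rewrite <- sumN_scal. apply sumN_le. intros j Hj.
      assert (E : vsub y' (vscal t x) j = dot N y' (pj N x j)).
      { unfold pj. rewrite dot_sub_r, dot_scal_r, dot_sym, dot_ev by auto. unfold vsub, vscal, t. field. lra. }
      rewrite E, Hdy. eapply Rle_trans. apply dot_abs_le. rewrite vnorm_J. lra. }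
    pose proof (pdist_L1 N y' x t Hyy Hx) as HL1.
    assert (Hny' : del * vnorm N y' <= vnorm N c * S k).
    { eapply Rle_trans; [|exact Hsub]. eapply Rle_trans; [|exact HL1]. apply Rmult_le_compat_r. apply vnorm_pos. auto. }
    assert (Hval : dot N (J c) (B k (J x)) = dot N y' x) by (rewrite Hdy; reflexivity).
    rewrite Hval. eapply Rle_trans. apply dot_abs_le.
    pose proof (vnorm_pos N x). pose proof (vnorm_pos N y').
    assert (vnorm N y' <= vnorm N c * S k * / del).
    { apply Rmult_le_reg_l with del; auto. replace (del * (vnorm N c * S k * / del)) with (vnorm N c * S k) by (field; lra). lra. }
    assert (0 <= vnorm N c * S k * / del) by lra.
    rewrite (Rabs_pos_eq (_ * _ * _ * _)) by nra. nra. Qed.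

Definition al e := dot N e x / dot N x x.
Definition be e := dot N e (J x) / dot N x x.
Definition vT e := vsub (vsub e (vscal (al e) x)) (vscal (be e) (J x)).

Lemma vT_in e : inT (vT e).
Proof. assert (Hx := Hx'). split; unfold vT, al, be; rewrite !dot_sub_r, !dot_scal_r.
  - rewrite (dot_sym N x (J x)), x_iso, (dot_sym N x e). field. lra.
  - rewrite x_iso, dot_JJ, (dot_sym N (J x) e). field. lra. Qed.

Lemma e_dec e : forall i, e i = vadd (vadd (vscal (be e) (J x)) (vT e)) (vscal (al e) x) i.
Proof. intros i. unfold vT, vadd, vsub, vscal. ring. Qed.

Notation w := (fun k => B k (J x)).

Lemma dJw_T v : inT v -> EB (fun k => dot N (J v) (w k)).
Proof. intros Tv. destruct fp_ex as [fp Hfp]. destruct fm_ex as [fm Hfm].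
  apply (T_span fp fm Hfp Hfm (fun k v => dot N (J v) (w k))); auto.
  - intros. rewrite J_add, dot_add_l. reflexivity.
  - intros. rewrite J_scal, dot_scal_l. reflexivity.
  - intros. apply dot_ext; auto. apply J_ext; auto.
  - intros i Ti Ii Ni. apply inv_trick. split; auto. simpl. rewrite qJ; auto.
    apply pdist_perp. apply nonzero_dot; auto. rewrite dot_sym. exact (proj1 Ti). Qed.

Lemma dJw_JX : EB (fun k => dot N (J (J x)) (w k)).
Proof. assert (Hx := Hx'). apply inv_trick.
  - split. apply (dot_nonzero N _ (J x)). rewrite dot_JJ. lra. simpl. rewrite qJ, JJ, dot_sym. apply x_iso.
  - apply pdist_perp. rewrite dot_JJ; auto. apply x_iso. Qed.

Lemma dJw_X : EB (fun k => dot N (J x) (w k)).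
Proof. assert (Hx := Hx'). destruct fp_ex as [fp [Tfp [Nfp Jfp]]]. destruct fm_ex as [fm [Tfm [Nfm Jfm]]].
  assert (Hnp := vnorm_nonzero N fp Nfp). assert (Hnm := vnorm_nonzero N fm Nfm).
  set (lam := vnorm N fm / vnorm N fp).
  assert (Hlam : 0 < lam) by (apply Rdiv_lt_0_compat; auto).
  assert (Hl2 : lam * lam * dot N fp fp = dot N fm fm) by (unfold lam; rewrite <- !vnorm_sq; field; lra).
  set (i0 := vadd fm (vscal lam fp)).
  assert (Ti0 : inT i0) by (apply inT_add; auto; apply inT_scal; auto).
  assert (Ii0 : dot N (J i0) i0 = 0).
  { unfold i0. rewrite J_add, J_scal, Jfp, Jfm, dot_add_l, !dot_add_r, !dot_scal_l, !dot_scal_r.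
    rewrite (dot_sym N fp fm). lra. }
  assert (Pi0 : 0 < dot N i0 i0).
  { destruct (dot_pos N i0) as [|E]; auto. exfalso.
    assert (Z : forall l, (l < N)%nat -> i0 l = 0) by (apply dot_zero_coord; auto).
    assert (E2 : dot N (vadd i0 (J i0)) fp = 2 * lam * dot N fp fp).
    { rewrite (dot_ext N (vadd i0 (J i0)) (vscal (2 * lam) fp) fp fp). apply dot_scal_l.
      intros l Hl. unfold i0. rewrite J_add, J_scal, Jfp, Jfm. unfold vadd, vscal. ring. auto. }
    assert (E3 : dot N (vadd i0 (J i0)) fp = 0).
    { unfold dot. apply sumN_zero. intros l Hl. unfold vadd, Jv. rewrite Z by auto. destruct (Nat.ltb l (p+1)); ring. }
    pose proof (nonzero_dot N fp Nfp). nra. }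
  set (c := vadd x i0).
  assert (Hcx : dot N c x = dot N x x) by (unfold c; rewrite dot_add_l, (dot_sym N i0), (proj1 Ti0); ring).
  assert (Hcc : dot N c c = dot N x x + dot N i0 i0).
  { unfold c. rewrite dot_add_l, !dot_add_r, (dot_sym N i0 x), (proj1 Ti0). ring. }
  assert (HcP : is_point X c).
  { split. apply (dot_nonzero N _ x). lra. simpl. rewrite qJ. unfold c.
    rewrite J_add, dot_add_l, !dot_add_r, x_iso, Ii0, (proj2 Ti0), (dot_J N p i0 x), (dot_sym N i0), (proj2 Ti0). ring. }
  assert (Hpc : 0 < pdist N c x).
  { assert (Hpos : 0 < dot N c c) by lra. pose proof (pdist_sq N c x Hpos Hx) as E.
    rewrite Hcx, Hcc in E. pose proof (pdist_pos N c x) as P. destruct P as [P|P]; auto. exfalso.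
    rewrite <- P in E. assert (dot N x x ^ 2 / ((dot N x x + dot N i0 i0) * dot N x x) = 1) by lra.
    assert (dot N x x ^ 2 = (dot N x x + dot N i0 i0) * dot N x x).
    { apply (Rmult_eq_reg_r (/ ((dot N x x + dot N i0 i0) * dot N x x))). rewrite Rinv_r. unfold Rdiv in H. lra. nra.
      apply Rinv_neq_0_compat. nra. }
    nra. }
  pose proof (inv_trick c HcP Hpc) as Hc. pose proof (dJw_T i0 Ti0) as Hi.
  apply (EB_le _ (fun k => dot N (J c) (w k) + (-1) * dot N (J i0) (w k))).
  apply EB_plus; auto. apply EB_mult; auto. apply EB_const.
  exists 0%nat. intros k _. unfold c. rewrite J_add, dot_add_l. right. f_equal. ring. Qed.

Lemma dJw_any e : EB (fun k => dot N (J e) (w k)).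
Proof. apply (EB_le _ (fun k => be e * dot N (J (J x)) (w k) + dot N (J (vT e)) (w k) + al e * dot N (J x) (w k))).
  - apply EB_plus. apply EB_plus. apply EB_mult. apply EB_const. apply dJw_JX. apply dJw_T, vT_in. apply EB_mult. apply EB_const. apply dJw_X.
  - exists 0%nat. intros k _. right. f_equal.
    rewrite (dot_ext N (J e) (J (vadd (vadd (vscal (be e) (J x)) (vT e)) (vscal (al e) x))) (w k) (w k)).
    rewrite !J_add, !J_scal, !dot_add_l, !dot_scal_l. ring.
    apply J_ext. intros; apply e_dec. auto. Qed.

Lemma w_EB : EB (fun k => vnorm N (w k)).
Proof. apply (EB_le _ (fun k => sumN N (fun i => Rabs (dot N (J (J (ev i))) (w k))))).
  - apply EB_sumN. intros i Hi. apply EB_abs, dJw_any.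
  - exists 0%nat. intros k _. rewrite (Rabs_pos_eq (vnorm _ _)) by apply vnorm_pos.
    rewrite (Rabs_pos_eq (sumN _ _)) by (apply sumN_nonneg; intros; apply Rabs_pos).
    eapply Rle_trans. apply vnorm_le_sumabs. apply sumN_le. intros i Hi. rewrite JJ, dot_ev; auto. lra. Qed.

Lemma B_any e : EB (fun k => vnorm N (B k e)).
Proof. apply (EB_le _ (fun k => Rabs (be e) * vnorm N (w k) + vnorm N (B k (vT e)) + Rabs (al e))).
  - apply EB_plus. apply EB_plus. apply EB_mult. apply EB_const. apply w_EB. apply T_B, vT_in. apply EB_const.
  - exists 0%nat. intros k _. rewrite (Rabs_pos_eq (vnorm _ _)) by apply vnorm_pos.
    rewrite (Bk_ext N g x k e _ (fun i _ => e_dec e i)). rewrite !Bk_add, !Bk_scal.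
    pose proof (Rabs_pos (be e)). pose proof (Rabs_pos (al e)). pose proof (vnorm_pos N (w k)). pose proof (vnorm_pos N (B k (vT e))).
    rewrite (Rabs_pos_eq (_ + _ + _)) by nra.
    eapply Rle_trans. apply vnorm_triang. eapply Rle_trans. apply Rplus_le_compat_r. apply vnorm_triang.
    rewrite !vnorm_scal. change (Bk N g x k x) with (u k). rewrite vnorm_uu. lra. apply Hinv'. apply Hx'. Qed.

Lemma F_dec k e : F k e = vadd (vscal (be e) (F k (J x))) (F k (vT e)).
Proof. rewrite (Fk_ext N g x k e _ (fun i _ => e_dec e i)). rewrite Fk_shift. rewrite Fk_add, Fk_scal. reflexivity. apply Hinv'. apply Hx'. Qed.

Lemma BJT k z : forall i, (i < N)%nat -> B k (J (vscal (/ cc k) (mvT N (g k) z))) i = / (cc k * cc k) * J z i.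
Proof. intros i Hi. unfold Bk. rewrite J_scal, mv_scal. unfold vscal.
  pose proof (inv_formula2 p q (g k) (Hinv' k) (Hq_g k) z i Hi) as E. change (mv N (g k) (J (mvT N (g k) z)) i = J z i) in E. rewrite E. rewrite Rinv_mult. ring. Qed.

Lemma a_EB : EB (fun k => vnorm N (ak N g x k)).
Proof. apply (EB_le _ (fun k => sumN N (fun i => vnorm N (B k (ev i))))).
  - apply EB_sumN. intros i Hi. apply B_any.
  - exists 0%nat. intros k _. rewrite (Rabs_pos_eq (vnorm _ _)) by apply vnorm_pos.
    rewrite (Rabs_pos_eq (sumN _ _)) by (apply sumN_nonneg; intros; apply vnorm_pos).
    eapply Rle_trans. apply vnorm_le_sumabs. apply sumN_le. intros i Hi. apply (ak_coord_bound X g x Hinv' Hx'); auto. Qed.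

Lemma a_iso : cv0 (fun k => dot N (ak N g x k) (J (ak N g x k))).
Proof. apply (cv0_le _ (fun k => / (cc k * cc k))). apply cc_inf.
  exists 0%nat. intros k _. rewrite (ak_dot N g x).
  rewrite (dot_ext N (u k) (u k) _ (vscal (/ (cc k * cc k)) (J (u k)))); auto.
  2:{ intros i Hi. unfold ak. rewrite BJT; auto. }
  rewrite dot_scal_r. rewrite Rabs_mult. pose proof (cc_pos N g x Hinv' Hx' k).
  rewrite (Rabs_pos_eq (/ (cc k * cc k))) by (left; apply Rinv_0_lt_compat; nra).
  assert (Rabs (dot N (u k) (J (u k))) <= 1).
  { eapply Rle_trans. apply dot_abs_le. rewrite vnorm_J, vnorm_uu. lra. apply Hinv'. apply Hx'. }
  assert (0 < / (cc k * cc k)) by (apply Rinv_0_lt_compat; nra).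
  nra. Qed.

Lemma s_cv0 : cv0 (fun k => vnorm N (F k (J x))).
Proof. assert (Hx := Hx').
  set (rh := fun k => sumN N (fun j => vnorm N (F k (vT (ev j))))).
  assert (Hrh : cv0 rh) by (apply cv0_sumN; intros j Hj; apply T_cv0, vT_in).
  apply (cv0_le _ (fun k => dot N x x * (vnorm N (ak N g x k) * rh k + / (cc k * cc k)))).
  { apply cv0_const_mult. apply cv0_plus. apply (cv0_le _ (fun k => rh k * vnorm N (ak N g x k))).
    apply cv0_mult_EB; auto. apply a_EB. exists 0%nat; intros; rewrite Rmult_comm; lra. apply cc_inf. }
  exists 0%nat. intros k _.
  pose proof (cc_pos N g x Hinv' Hx k) as Hc.
  set (A := g k). set (s := F k (J x)). set (h := vscal (/ cc k) (mvT N A s)).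
  assert (Hh : forall e, dot N h e = dot N s (F k e)).
  { intros e. unfold h. rewrite dot_scal_l, mvT_adj'.
    assert (E : dot N s (B k e) = / cc k * dot N s (mv N A e)) by (unfold Bk; rewrite dot_scal_r; reflexivity).
    rewrite <- E. rewrite (dot_ext N s s (B k e) (vadd (vscal (dot N (u k) (B k e)) (u k)) (F k e))); auto.
    rewrite dot_add_r, dot_scal_r, (dot_sym N s (u k)). rewrite (dot_sym N (u k) s). unfold s. rewrite Fk_perp. ring.
    intros i Hi. unfold Fk, vadd, vsub, vscal. ring. }
  set (a0 := dot N s s / dot N x x).
  set (R := vsub h (vscal a0 (J x))).
  assert (HR : forall j, (j < N)%nat -> R j = dot N s (F k (vT (ev j)))).
  { intros j Hj. unfold R, vsub, vscal. rewrite <- (dot_ev N j h Hj), dot_sym, Hh, F_dec.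
    rewrite dot_add_r, dot_scal_r. unfold be. rewrite dot_ev by auto. unfold a0. fold s. field. lra. }
  assert (HRn : vnorm N R <= vnorm N s * rh k).
  { eapply Rle_trans. apply vnorm_le_sumabs. unfold rh. rewrite <- sumN_scal. apply sumN_le. intros j Hj.
    rewrite HR by auto. apply dot_abs_le. }
  assert (Hjh : forall i, (i < N)%nat -> J h i = vadd (vscal a0 x) (J R) i).
  { intros i Hi. unfold R. rewrite J_sub, J_scal, JJ. unfold vadd, vsub, vscal. ring. }
  assert (E1 : dot N (u k) (B k (J h)) = a0 + dot N (ak N g x k) (J R)).
  { rewrite (Bk_ext N g x k _ _ Hjh). rewrite Bk_add, Bk_scal, dot_add_r, dot_scal_r.
    change (Bk N g x k x) with (u k). rewrite uu_unit, ak_dot; auto. ring. apply Hinv'. }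
  assert (E2 : dot N (u k) (B k (J h)) = / (cc k * cc k) * dot N (u k) (J s)).
  { rewrite <- dot_scal_r. apply dot_ext; auto. intros i Hi. unfold h, A. rewrite BJT; auto. }
  assert (Ha0 : Rabs a0 <= / (cc k * cc k) * vnorm N s + vnorm N (ak N g x k) * (vnorm N s * rh k)).
  { assert (a0 = / (cc k * cc k) * dot N (u k) (J s) - dot N (ak N g x k) (J R)) by lra.
    rewrite H. eapply Rle_trans. apply Rabs_triang. rewrite Rabs_Ropp, Rabs_mult.
    assert (0 < / (cc k * cc k)) by (apply Rinv_0_lt_compat; nra).
    rewrite (Rabs_pos_eq (/ (cc k * cc k))) by lra.
    apply Rplus_le_compat. apply Rmult_le_compat_l. lra. eapply Rle_trans. apply dot_abs_le. rewrite vnorm_J, vnorm_uu. lra. apply Hinv'. auto.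
    eapply Rle_trans. apply dot_abs_le. rewrite vnorm_J. apply Rmult_le_compat_l. apply vnorm_pos. auto. }
  assert (Ha0' : a0 * dot N x x = vnorm N s * vnorm N s) by (unfold a0; rewrite vnorm_sq; field; lra).
  assert (Hpos : 0 <= a0) by (unfold a0; apply Rmult_le_pos; [apply dot_pos| left; apply Rinv_0_lt_compat; auto]).
  rewrite Rabs_pos_eq in Ha0 by auto.
  rewrite (Rabs_pos_eq (vnorm _ _)) by apply vnorm_pos.
  assert (Hrh0 : 0 <= rh k) by (unfold rh; apply sumN_nonneg; intros; apply vnorm_pos).
  pose proof (vnorm_pos N (ak N g x k)). assert (0 < / (cc k * cc k)) by (apply Rinv_0_lt_compat; nra).
  rewrite Rabs_pos_eq by (apply Rmult_le_pos; [lra| nra]).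
  destruct (vnorm_pos N s) as [Hs|Hs].
  - apply Rmult_le_reg_r with (vnorm N s); auto. rewrite <- Ha0'.
    replace (dot N x x * (vnorm N (ak N g x k) * rh k + / (cc k * cc k)) * vnorm N s) with
       (dot N x x * (/ (cc k * cc k) * vnorm N s + vnorm N (ak N g x k) * (vnorm N s * rh k))) by ring.
    rewrite Rmult_comm. apply Rmult_le_compat_l; lra.
  - rewrite <- Hs. apply Rmult_le_pos. lra. nra. Qed.

End Ein.

Lemma cv0_const c : cv0 (fun _ => c) -> c = 0.
Proof. intros H. destruct (Req_dec c 0) as [|Hc]; auto. exfalso.
  destruct (H (Rabs c)) as [k0 Hk]. apply Rabs_pos_lt; auto. specialize (Hk k0 (le_n _)). lra. Qed.

Theorem Ein_case (p q : nat) (g : nat -> Mat) (T : nat -> R) (x : Vec) :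
  admissible (Ein p q) ->
  (forall k, in_group (Ein p q) (g k)) ->
  (forall k, 0 < T k) -> cv_infty T ->
  is_point (Ein p q) x ->
  (forall xs : nat -> Vec, (forall k, is_point (Ein p q) (xs k)) -> pconv (Ein p q) xs x ->
     pconv (Ein p q) (fun k => mv (mdim (Ein p q)) (g k) (xs k)) x) ->
  (forall v, is_tangent (Ein p q) x v ->
     Un_cv (fun k => / T k * ln (dnorm (mdim (Ein p q)) (g k) x v)) (-1)) ->
  exists (phi : nat -> nat) (a : Vec),
    strict_incr phi /\ chart_center (Ein p q) a /\ in_chart (Ein p q) a x /\
    forall K : Vec -> Prop, compactX (Ein p q) K -> (exists y, K y) ->
      (forall y, K y -> in_chart (Ein p q) a y) ->
      hconv_point (Ein p q) (fun k z => exists y, K y /\ z = mv (mdim (Ein p q)) (g (phi k)) y) x.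
Proof.
  intros [Hp Hq] Hg HT HTi Hxp H1 H2.
  assert (Hp1 : (1 <= p)%nat) by lia. assert (Hq1 : (1 <= q)%nat) by lia.
  set (X := Ein p q). set (N := mdim X).
  assert (Hinv : forall k, invertible N (g k)) by (intros k; exact (proj1 (Hg k))).
  assert (Hx : 0 < dot N x x) by (apply nonzero_dot; exact (proj1 Hxp)).
  assert (HF : forall j, (j < N)%nat -> cv0 (fun k => vnorm N (Fk N g x k (ev j)))).
  { intros j Hj.
    apply (cv0_le _ (fun k => Rabs (be p q x (ev j)) * vnorm N (Fk N g x k (Jv p x)) + vnorm N (Fk N g x k (vT p q x (ev j))))).
    - apply cv0_plus. apply cv0_const_mult. apply (s_cv0 p q g T x Hp1 Hq1 Hg Hxp HT HTi H1 H2).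
      apply (T_cv0 p q g T x Hg Hxp HT HTi H2). apply vT_in. exact Hxp.
    - exists 0%nat. intros k _. rewrite (F_dec p q g x Hg Hxp).
      rewrite (Rabs_pos_eq (vnorm _ _)) by apply vnorm_pos.
      pose proof (Rabs_pos (be p q x (ev j))). pose proof (vnorm_pos N (Fk N g x k (Jv p x))).
      pose proof (vnorm_pos N (Fk N g x k (vT p q x (ev j)))).
      change (mdim (Ein p q)) with N in *. rewrite Rabs_pos_eq by nra. eapply Rle_trans. apply vnorm_triang. rewrite vnorm_scal. lra. }
  assert (HB : forall j, (j < N)%nat -> EB (fun k => vnorm N (Bk N g x k (ev j)))).
  { intros j Hj. apply (B_any p q g T x Hp1 Hq1 Hg Hxp HT HTi H1 H2). }
  destruct (final_core X g x Hinv Hx (Hu_cv X g x Hinv Hxp H1) HF HB) as [phi [a [Hphi [Ha [Hax Hfin]]]]].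
  change (dot N a x = 1) in Hax.
  assert (Hiso : dot N a (Jv p a) = 0).
  { apply cv0_const.
    set (del := fun k => sumN N (fun i => Rabs (ak N g x (phi k) i - a i))).
    assert (Hdel : cv0 del) by (apply (cv0_dist_coords N (fun k => ak N g x (phi k)) a); auto).
    assert (HaEB : EB (fun k => vnorm N (ak N g x (phi k)))).
    { apply (EB_sub (fun k => vnorm N (ak N g x k))); auto. apply (a_EB p q g T x Hp1 Hq1 Hg Hxp HT HTi H1 H2). }
    assert (Hai : cv0 (fun k => dot N (ak N g x (phi k)) (Jv p (ak N g x (phi k))))).
    { apply (cv0_sub (fun k => dot N (ak N g x k) (Jv p (ak N g x k)))); auto. apply (a_iso p q g T x Hp1 Hq1 Hg Hxp HT HTi H1 H2). }
    apply (cv0_le _ (fun k => Rabs (dot N (ak N g x (phi k)) (Jv p (ak N g x (phi k)))) + del k * (vnorm N (ak N g x (phi k)) + vnorm N a))).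
    - apply cv0_plus. apply (cv0_le _ _ Hai). exists 0%nat. intros. rewrite Rabs_Rabsolu. lra.
      apply cv0_mult_EB; auto. apply EB_plus; auto. apply EB_const.
    - exists 0%nat. intros k _. set (ak0 := ak N g x (phi k)).
      assert (Hd : vnorm N (vsub ak0 a) <= del k) by (eapply Rle_trans; [apply vnorm_le_sumabs| right; reflexivity]).
      assert (E : dot N a (Jv p a) = dot N ak0 (Jv p ak0) - (dot N (vsub ak0 a) (Jv p ak0) + dot N a (Jv p (vsub ak0 a)))).
      { rewrite J_sub, dot_sub_l, dot_sub_r. ring. }
      assert (A1 : Rabs (dot N (vsub ak0 a) (Jv p ak0)) <= del k * vnorm N ak0).
      { eapply Rle_trans. apply dot_abs_le. rewrite vnorm_J. apply Rmult_le_compat_r. apply vnorm_pos. auto. }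
      assert (A2 : Rabs (dot N a (Jv p (vsub ak0 a))) <= del k * vnorm N a).
      { eapply Rle_trans. apply dot_abs_le. rewrite vnorm_J. rewrite Rmult_comm. apply Rmult_le_compat_r. apply vnorm_pos. auto. }
      assert (Hdel0 : 0 <= del k) by (unfold del; apply sumN_nonneg; intros; apply Rabs_pos).
      pose proof (vnorm_pos N ak0). pose proof (vnorm_pos N a).
      rewrite E.
      rewrite (Rabs_pos_eq (Rabs _ + _)) by (apply Rplus_le_le_0_compat; [apply Rabs_pos| apply Rmult_le_pos; lra]).
      pose proof (Rabs_triang (dot N ak0 (Jv p ak0)) (- (dot N (vsub ak0 a) (Jv p ak0) + dot N a (Jv p (vsub ak0 a))))) as T1.
      rewrite Rabs_Ropp in T1.
      pose proof (Rabs_triang (dot N (vsub ak0 a) (Jv p ak0)) (dot N a (Jv p (vsub ak0 a)))) as T2.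
      unfold Rminus. lra. }
  exists phi, (Jv p a). split; auto. split; [|split].
  - split. apply (dot_nonzero N _ (Jv p x)). rewrite dot_JJ. change (dot N a x <> 0). rewrite Hax; lra.
    simpl. rewrite qform_J, JJ. exact Hiso.
  - split; auto. simpl. rewrite qform_J, JJ. change (dot N a x <> 0). rewrite Hax; lra.
  - intros K HK Hne Hch. apply Hfin; auto. intros y Ky. pose proof (proj2 (Hch y Ky)) as Z. simpl in Z.
    rewrite qform_J, JJ in Z. exact Z.
Qed.


Theorem lemma4p5 (X : model) (g : nat -> Mat) (T : nat -> R) (x : Vec) :
  admissible X ->
  (forall k, in_group X (g k)) ->
  (forall k, 0 < T k) -> cv_infty T ->
  is_point X x ->
  (forall xs : nat -> Vec, (forall k, is_point X (xs k)) -> pconv X xs x ->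
     pconv X (fun k => mv (mdim X) (g k) (xs k)) x) ->
  (forall v, is_tangent X x v ->
     Un_cv (fun k => / T k * ln (dnorm (mdim X) (g k) x v)) (-1)) ->
  exists (phi : nat -> nat) (a : Vec),
    strict_incr phi /\ chart_center X a /\ in_chart X a x /\
    forall K : Vec -> Prop, compactX X K -> (exists y, K y) ->
      (forall y, K y -> in_chart X a y) ->
      hconv_point X (fun k z => exists y, K y /\ z = mv (mdim X) (g (phi k)) y) x.
Proof.
  destruct X as [n | p q]; intros Hadm.
  - apply RPn_case.
  - apply Ein_case; auto.
Qed.
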